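(* Let $J\in\mathbb Z_{>0}$, $i_1,i_2\in\mathbb Z_{\ge0}$ and $j_1,j_2\in\{0,1,\dots,J\}$ with $i_1+j_1=i_2+j_2$, and set $v=-\eta\Lambda$. Then $$W_J(i_1,j_1;i_2,j_2\mid -\eta\Lambda,\lambda)=f(2\eta)^{i_2-i_1}\frac{\mathbf 1_{i_1\ge j_2}[2\eta J]_J}{[2\eta j_1]_{j_1}[2\eta(J-j_1)]_{J-j_1}}\frac{[2\eta\Lambda]_{i_1}}{[2\eta\Lambda]_{i_2}}\frac{[2\eta i_1]_{j_2}[2\eta(\Lambda-i_1)]_{J-j_2}}{[2\eta\Lambda]_J}$$ $$\times\frac{[\lambda+2\eta i_2]_{J-j_1}[\lambda+2\eta(i_2+j_1-\Lambda-1)]_{j_1}}{[\lambda+2\eta j_1]_{J-j_1}[\lambda+2\eta(2j_1-J-1)]_{j_1}}.$$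
   Context: Fix $\eta,\tau\in\mathbb C$, $\operatorname{Im}\tau>0$. $f(z)$ denotes either $\theta(z)=-\sum_{j\in\mathbb Z}\exp\big(\pi\mathbf i\tau(j+\tfrac12)^2+2\pi\mathbf i(j+\tfrac12)(z+\tfrac12)\big)$ or $\sin(\pi z)$. Elliptic Pochhammer: $[a]_k=\prod_{m=0}^{k-1}f(a-2\eta m)$ for $k\ge0$, $[a]_k=\prod_{m=1}^{-k}f(a+2\eta m)^{-1}$ for $k<0$. Unfused weights ($k\ge0$): $W_1(k,0;k,0\mid v,\lambda,\Lambda)=\frac{f(\eta(\Lambda-2k)-v)f(\lambda+2k\eta)}{f(\eta\Lambda-v)f(\lambda)}$, $W_1(k,1;k+1,0\mid\cdot)=\frac{f(v+\lambda+\eta(2k+2-\Lambda))f(2\eta)}{f(\eta\Lambda-v)f(\lambda)}$, $W_1(k,0;k-1,1\mid\cdot)=\frac{f(\lambda-v+\eta(2k-2-\Lambda))f(2\eta(\Lambda+1-k))f(2k\eta)}{f(\eta\Lambda-v)f(\lambda)f(2\eta)}$ ($k\ge1$), $W_1(k,1;k,1\mid\cdot)=\frac{f(\eta(2k-\Lambda)-v)f(\lambda+2\eta(k-\Lambda))}{f(\eta\Lambda-v)f(\lambda)}$, and $0$ otherwise. Column weights: for $\mathcal J_1=(j_{1,k})_{k=1}^J,\mathcal J_2=(j_{2,k})_{k=1}^J\in\{0,1\}^J$, $i^{(1)}=i_1$, $i^{(k+1)}=i^{(k)}+j_{1,k}-j_{2,k}$, $\Phi_J=\lambda$, $\Phi_k=\Phi_{k+1}\mp2\eta$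 according as $j_{1,k+1}=0$ or $1$; $W_J(i_1,\mathcal J_1;i_2,\mathcal J_2\mid v,\lambda)=\prod_{k=1}^JW_1(i^{(k)},j_{1,k};i^{(k+1)},j_{2,k}\mid v+2\eta(k-1),\Phi_k,\Lambda)$ if all $i^{(k)}\ge0$ and $i^{(J+1)}=i_2$, else $0$. Fused weight: $W_J(i_1,j_1;i_2,j_2\mid v,\lambda)=\sum_{|\mathcal J_1|=j_1}W_J(i_1,\mathcal J_1;i_2,\mathcal K\mid v,\lambda)$ for any $\mathcal K$ with $|\mathcal K|=j_2$ (independent of $\mathcal K$); $\Lambda$ is suppressed. *)

(* Defs.v *)
From Stdlib Require Import Reals ZArith List Bool.
Import ListNotations.
Open Scope R_scope.

Record Cplx := mkC { re : R; im : R }.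

Definition Czero : Cplx := mkC 0 0.
Definition Cone : Cplx := mkC 1 0.
Definition Ci : Cplx := mkC 0 1.
Definition RtoC (x : R) : Cplx := mkC x 0.
Definition ZtoC (z : Z) : Cplx := mkC (IZR z) 0.
Definition Cadd (a b : Cplx) : Cplx := mkC (re a + re b) (im a + im b).
Definition Copp (a : Cplx) : Cplx := mkC (- re a) (- im a).
Definition Csub (a b : Cplx) : Cplx := Cadd a (Copp b).
Definition Cmul (a b : Cplx) : Cplx :=
  mkC (re a * re b - im a * im b) (re a * im b + im a * re b).
Definition Cinv (a : Cplx) : Cplx :=
  mkC (re a / (re a * re a + im a * im a)) (- im a / (re a * re a + im a * im a)).
Definition Cdiv (a b : Cplx) : Cplx := Cmul a (Cinv b).

Declare Scope C_scope.
Delimit Scope C_scope with Cplx.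
Infix "+" := Cadd : C_scope.
Infix "-" := Csub : C_scope.
Infix "*" := Cmul : C_scope.
Infix "/" := Cdiv : C_scope.
Notation "- a" := (Copp a) : C_scope.

Fixpoint Cpow (a : Cplx) (n : nat) : Cplx :=
  match n with O => Cone | S n => Cmul a (Cpow a n) end.
Definition Cpowz (a : Cplx) (z : Z) : Cplx :=
  if (0 <=? z)%Z then Cpow a (Z.to_nat z) else Cinv (Cpow a (Z.to_nat (- z))).

Definition Cexp (z : Cplx) : Cplx := mkC (exp (re z) * cos (im z)) (exp (re z) * sin (im z)).
Definition Csin (z : Cplx) : Cplx :=
  Cdiv (Csub (Cexp (Cmul Ci z)) (Cexp (Copp (Cmul Ci z)))) (Cmul (RtoC 2) Ci).
Definition CPI : Cplx := RtoC PI.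

Definition Csum (l : list Cplx) : Cplx := fold_right Cadd Czero l.
Definition Cprod (l : list Cplx) : Cplx := fold_right Cmul Cone l.

Definition Cseq_cv (u : nat -> Cplx) (l : Cplx) : Prop :=
  Un_cv (fun n => re (u n)) (re l) /\ Un_cv (fun n => im (u n)) (im l).

(** Sum over j in Z of a (two-sided) series, as limit of symmetric partial
    sums  sum_{j=-N}^{N} a j. *)
Definition Zsym_partial (a : Z -> Cplx) (N : nat) : Cplx :=
  Csum (map (fun k => a (Z.of_nat k - Z.of_nat N)%Z) (seq 0 (2 * N + 1))).
Definition Zseries_sum (a : Z -> Cplx) (l : Cplx) : Prop :=
  Cseq_cv (Zsym_partial a) l.

Definition theta_term (tau z : Cplx) (j : Z) : Cplx :=
  let h := Cadd (ZtoC j) (RtoC (1/2)) in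
  Cexp (Cadd (Cmul (Cmul (Cmul CPI Ci) tau) (Cmul h h))
             (Cmul (Cmul (Cmul (RtoC 2) (Cmul CPI Ci)) h) (Cadd z (RtoC (1/2))))).

Definition is_theta (tau : Cplx) (th : Cplx -> Cplx) : Prop :=
  forall z : Cplx, Zseries_sum (theta_term tau z) (Copp (th z)).

Definition sinpi (z : Cplx) : Cplx := Csin (Cmul CPI z).

Definition poch (f : Cplx -> Cplx) (eta a : Cplx) (k : Z) : Cplx :=
  if (0 <=? k)%Z then
    Cprod (map (fun m => f (Csub a (Cmul (RtoC 2) (Cmul eta (RtoC (INR m))))))
               (seq 0 (Z.to_nat k)))
  else
    Cprod (map (fun m => Cinv (f (Cadd a (Cmul (RtoC 2) (Cmul eta (RtoC (INR m)))))))
               (seq 1 (Z.to_nat (- k)))).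

Definition two (x : Cplx) : Cplx := Cmul (RtoC 2) x.

Definition W1 (f : Cplx -> Cplx) (eta : Cplx) (k : Z) (a : bool) (k' : Z) (b : bool)
    (v lam Lam : Cplx) : Cplx :=
  let kC := ZtoC k in
  let den := Cmul (f (Csub (Cmul eta Lam) v)) (f lam) in
  if (0 <=? k)%Z then
  match a, b with
  | false, false =>
      if (k' =? k)%Z then
        Cdiv (Cmul (f (Csub (Cmul eta (Csub Lam (two kC))) v))
                   (f (Cadd lam (two (Cmul kC eta)))))
             den
      else Czero
  | true, false =>
      if (k' =? k + 1)%Z then
        Cdiv (Cmul (f (Cadd (Cadd v lam)
                            (Cmul eta (Csub (Cadd (two kC) (RtoC 2)) Lam))))
                   (f (two eta)))
             den
      else Czero
  | false, true =>
      if ((k' =? k - 1) && (1 <=? k))%Z then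
        Cdiv (Cmul (Cmul (f (Cadd (Csub lam v)
                                  (Cmul eta (Csub (Csub (two kC) (RtoC 2)) Lam))))
                         (f (two (Cmul eta (Csub (Cadd Lam Cone) kC)))))
                   (f (two (Cmul kC eta))))
             (Cmul den (f (two eta)))
      else Czero
  | true, true =>
      if (k' =? k)%Z then
        Cdiv (Cmul (f (Csub (Cmul eta (Csub (two kC) Lam)) v))
                   (f (Cadd lam (two (Cmul eta (Csub kC Lam))))))
             den
      else Czero
  end
  else Czero.

Definition b2Z (b : bool) : Z := if b then 1%Z else 0%Z.

(** k-th entry (k = 1..J) of a 0/1 sequence given as a list *)
Definition ent (l : list bool) (k : nat) : bool := nth (k - 1) l false.

(** i^(k) for k >= 1:  i^(1) = i1, i^(k+1) = i^(k) + j_{1,k} - j_{2,k} *)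
Definition istate (i1 : nat) (J1 J2 : list bool) (k : nat) : Z :=
  (Z.of_nat i1 +
   fold_right Z.add 0%Z
     (map (fun m => b2Z (ent J1 m) - b2Z (ent J2 m))%Z (seq 1 (k - 1))))%Z.

(** Phi_J = lam,  Phi_k = Phi_{k+1} - 2 eta if j_{1,k+1} = 0, + 2 eta if = 1 *)
Definition Phi (eta lam : Cplx) (J : nat) (J1 : list bool) (k : nat) : Cplx :=
  Cadd lam (two (Cmul eta (ZtoC
     (fold_right Z.add 0%Z
        (map (fun m => if ent J1 m then 1%Z else (-1)%Z) (seq (k + 1) (J - k))))))).

Definition WJcol (f : Cplx -> Cplx) (eta Lam : Cplx) (J : nat)
    (i1 : nat) (J1 : list bool) (i2 : nat) (J2 : list bool) (v lam : Cplx) : Cplx :=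
  if forallb (fun k => (0 <=? istate i1 J1 J2 k)%Z) (seq 1 (J + 1))
     && (istate i1 J1 J2 (J + 1) =? Z.of_nat i2)%Z
  then Cprod (map (fun k =>
         W1 f eta (istate i1 J1 J2 k) (ent J1 k) (istate i1 J1 J2 (k + 1)) (ent J2 k)
            (Cadd v (two (Cmul eta (RtoC (INR (k - 1)))))) (Phi eta lam J J1 k) Lam)
         (seq 1 J))
  else Czero.

Fixpoint bool_lists (n : nat) : list (list bool) :=
  match n with
  | O => [[]]
  | S n => map (cons false) (bool_lists n) ++ map (cons true) (bool_lists n)
  end.

Definition ones (l : list bool) : nat := count_occ Bool.bool_dec l true.

(** Fused weight, computed with a given choice K of the outgoing 0/1 sequence
    (|K| = j2); the paper asserts independence of K. *)
Definition WJfused_K (f : Cplx -> Cplx) (eta Lam : Cplx) (J : nat)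
    (i1 j1 i2 : nat) (K : list bool) (v lam : Cplx) : Cplx :=
  Csum (map (fun J1 => WJcol f eta Lam J i1 J1 i2 K v lam)
            (filter (fun l => Nat.eqb (ones l) j1) (bool_lists J))).

(* Main.v *)
Require Import Defs.
From Stdlib Require Import Reals ZArith List Bool Lra Lia Field Permutation.
Import ListNotations.
Open Scope R_scope.

Lemma Ceq : forall a b : Cplx, re a = re b -> im a = im b -> a = b.
Proof. intros [a1 a2] [b1 b2]; simpl; intros; subst; reflexivity. Qed.

Ltac Cring := apply Ceq; simpl; ring.

Lemma Cring_th : ring_theory Czero Cone Cadd Cmul Csub Copp (@eq Cplx).
Proof.
  constructor; intros; try Cring.
Qed.

Lemma Cone_neq : Cone <> Czero.
Proof. intro H. injection H. lra. Qed.

Lemma Cnz_norm : forall p : Cplx, p <> Czero -> re p * re p + im p * im p <> 0.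
Proof.
  intros [a b] H; simpl. intro E. apply H.
  assert (a = 0) by nra. assert (b = 0) by nra. subst. reflexivity.
Qed.

Lemma Cinv_l : forall p : Cplx, p <> Czero -> Cmul (Cinv p) p = Cone.
Proof.
  intros p H. pose proof (Cnz_norm p H) as N. destruct p as [a b]; simpl in *.
  apply Ceq; simpl; field; auto.
Qed.

Lemma Cfield_th : field_theory Czero Cone Cadd Cmul Csub Copp Cdiv Cinv (@eq Cplx).
Proof.
  constructor.
  - exact Cring_th.
  - exact Cone_neq.
  - reflexivity.
  - exact Cinv_l.
Qed.

Add Field Cfield : Cfield_th.

Lemma test (a b : Cplx) : b <> Czero -> Cmul (Cdiv a b) b = a.
Proof. intros. field. auto. Qed.

Lemma Csum_app : forall l1 l2, Csum (l1 ++ l2) = Cadd (Csum l1) (Csum l2).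
Proof. induction l1; intros; simpl. - Cring. - rewrite IHl1. Cring. Qed.
Lemma Cprod_app : forall l1 l2, Cprod (l1 ++ l2) = Cmul (Cprod l1) (Cprod l2).
Proof. induction l1; intros; simpl. - Cring. - rewrite IHl1. Cring. Qed.
Lemma Csum_perm : forall l1 l2, Permutation l1 l2 -> Csum l1 = Csum l2.
Proof.
  intros l1 l2 H; induction H; simpl; auto.
  - rewrite IHPermutation; auto.
  - Cring.
  - congruence.
Qed.

Lemma bool_lists_len : forall n l, In l (bool_lists n) -> length l = n.
Proof.
  induction n; simpl; intros l H.
  - destruct H as [<-|[]]; auto.
  - apply in_app_or in H; destruct H as [H|H]; apply in_map_iff in H;
      destruct H as [l' [<- H]]; simpl; f_equal; auto.
Qed.

Definition snoc (b : bool) (l : list bool) := l ++ [b].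

Lemma bool_lists_perm : forall n,
  Permutation (bool_lists (S n)) (map (snoc false) (bool_lists n) ++ map (snoc true) (bool_lists n)).
Proof.
  induction n.
  - simpl. apply Permutation_refl.
  - change (bool_lists (S (S n))) with
      (map (cons false) (bool_lists (S n)) ++ map (cons true) (bool_lists (S n))).
    eapply Permutation_trans.
    { apply Permutation_app; apply Permutation_map; exact IHn. }
    rewrite !map_app, !map_map.
    change (bool_lists (S n)) with (map (cons false) (bool_lists n) ++ map (cons true) (bool_lists n)).
    rewrite !map_app, !map_map.
    unfold snoc; simpl.
    (* A B C D  ->  A C B D *)
    rewrite <- !app_assoc. apply Permutation_app_head.
    rewrite !app_assoc. apply Permutation_app_tail. apply Permutation_app_comm.
Qed.

Lemma ones_snoc : forall b l, ones (snoc b l) = (ones l + (if b then 1 else 0))%nat.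
Proof.
  intros b l. unfold ones, snoc. rewrite count_occ_app. simpl. destruct b; simpl; lia.
Qed.

Lemma filter_map_snoc : forall (P : list bool -> bool) b (L : list (list bool)),
  filter P (map (snoc b) L) = map (snoc b) (filter (fun l => P (snoc b l)) L).
Proof.
  induction L; simpl; auto. destruct (P (snoc b a)); simpl; rewrite IHL; auto.
Qed.

Lemma Csum_map_map : forall (G : list bool -> Cplx) (h : list bool -> list bool) L,
  Csum (map G (map h L)) = Csum (map (fun l => G (h l)) L).
Proof. intros. rewrite map_map. auto. Qed.

Lemma forallb_ext_in : forall (A : Type) (f g : A -> bool) l,
  (forall x, In x l -> f x = g x) -> forallb f l = forallb g l.
Proof. induction l; simpl; intros; auto. rewrite H, IHl; auto. Qed.

Lemma fold_Zadd_app : forall l1 l2,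
  fold_right Z.add 0%Z (l1 ++ l2) = (fold_right Z.add 0%Z l1 + fold_right Z.add 0%Z l2)%Z.
Proof. induction l1; simpl; intros; auto. rewrite IHl1; lia. Qed.

Lemma ent_snoc : forall l a k, (1 <= k <= length l)%nat -> ent (l ++ [a]) k = ent l k.
Proof. intros. unfold ent. apply app_nth1. lia. Qed.

Lemma ent_last : forall l a, ent (l ++ [a]) (S (length l)) = a.
Proof. intros. unfold ent. replace (S (length l) - 1)%nat with (length l) by lia.
  rewrite app_nth2 by lia. rewrite Nat.sub_diag. reflexivity. Qed.

Lemma istate_snoc : forall i1 J1 J2 a b k,
  length J1 = length J2 -> (k <= S (length J1))%nat ->
  istate i1 (J1 ++ [a]) (J2 ++ [b]) k = istate i1 J1 J2 k.
Proof.
  intros. unfold istate. f_equal. f_equal. apply map_ext_in. intros m Hm.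
  apply in_seq in Hm. rewrite !ent_snoc by lia. reflexivity.
Qed.

Lemma istate_last : forall i1 J1 J2 a b,
  length J1 = length J2 ->
  istate i1 (J1 ++ [a]) (J2 ++ [b]) (S (S (length J1))) =
  (istate i1 J1 J2 (S (length J1)) + b2Z a - b2Z b)%Z.
Proof.
  intros. unfold istate.
  replace (S (S (length J1)) - 1)%nat with (S (length J1)) by lia.
  replace (S (length J1) - 1)%nat with (length J1) by lia.
  rewrite seq_S, map_app, fold_Zadd_app. simpl.
  replace (1 + length J1)%nat with (S (length J1)) by lia.
  rewrite ent_last. rewrite H at 2. rewrite ent_last.
  replace (map (fun m : nat => (b2Z (ent (J1 ++ [a]) m) - b2Z (ent (J2 ++ [b]) m))%Z) (seq 1 (length J1)))
    with (map (fun m : nat => (b2Z (ent J1 m) - b2Z (ent J2 m))%Z) (seq 1 (length J1))).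
  - lia.
  - apply map_ext_in. intros m Hm. apply in_seq in Hm. rewrite !ent_snoc by lia. reflexivity.
Qed.

Definition sgn (a : bool) : Z := if a then 1%Z else (-1)%Z.

Lemma Phi_snoc : forall eta lam J1 a k, (k <= length J1)%nat ->
  Phi eta lam (S (length J1)) (J1 ++ [a]) k =
  Phi eta (Cadd lam (two (Cmul eta (ZtoC (sgn a))))) (length J1) J1 k.
Proof.
  intros. unfold Phi.
  replace (S (length J1) - k)%nat with (S (length J1 - k)) by lia.
  rewrite seq_S, map_app, fold_Zadd_app.
  replace (k + 1 + (length J1 - k))%nat with (S (length J1)) by lia.
  simpl. rewrite ent_last.
  replace (map (fun m : nat => if ent (J1 ++ [a]) m then 1%Z else (-1)%Z) (seq (k + 1) (length J1 - k)))
    with (map (fun m : nat => if ent J1 m then 1%Z else (-1)%Z) (seq (k + 1) (length J1 - k))).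
  - unfold sgn, ZtoC, two. apply Ceq; cbn [re im Cadd Cmul RtoC]; destruct a; cbn [Z.add]; rewrite ?plus_IZR; ring.
  - apply map_ext_in. intros m Hm. apply in_seq in Hm. rewrite ent_snoc by lia. reflexivity.
Qed.

Lemma WJcol_snoc : forall f eta Lam i1 J1 a i2 K b v lam,
  length J1 = length K ->
  WJcol f eta Lam (S (length J1)) i1 (J1 ++ [a]) i2 (K ++ [b]) v lam =
  if (Z.of_nat i2 + b2Z b - b2Z a <? 0)%Z then Czero else
  Cmul (WJcol f eta Lam (length J1) i1 J1 (Z.to_nat (Z.of_nat i2 + b2Z b - b2Z a)) K v
          (Cadd lam (two (Cmul eta (ZtoC (sgn a))))))
       (W1 f eta (Z.of_nat i2 + b2Z b - b2Z a) a (Z.of_nat i2) b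
          (Cadd v (two (Cmul eta (RtoC (INR (length J1)))))) lam Lam).
Proof.
  intros f eta Lam i1 J1 a i2 K b v lam HL.
  set (J := length J1) in *.
  unfold WJcol.
  replace (S J + 1)%nat with (S (S J)) by lia.
  replace (J + 1)%nat with (S J) by lia.
  rewrite (seq_S (S J) 1), forallb_app.
  replace (1 + S J)%nat with (S (S J)) by lia.
  rewrite (forallb_ext_in _ _ (fun k => (0 <=? istate i1 J1 K k)%Z)).
  2:{ intros x Hx. apply in_seq in Hx. rewrite istate_snoc by lia. reflexivity. }
  unfold J; rewrite istate_last by auto; fold J.
  rewrite (seq_S J 1), map_app, Cprod_app.
  replace (1 + J)%nat with (S J) by lia.
  replace (map (fun k : nat => W1 f eta (istate i1 (J1 ++ [a]) (K ++ [b]) k) (ent (J1 ++ [a]) k)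
          (istate i1 (J1 ++ [a]) (K ++ [b]) (k + 1)) (ent (K ++ [b]) k)
          (Cadd v (two (Cmul eta (RtoC (INR (k - 1)))))) (Phi eta lam (S J) (J1 ++ [a]) k) Lam)
       (seq 1 J))
  with (map (fun k : nat => W1 f eta (istate i1 J1 K k) (ent J1 k)
          (istate i1 J1 K (k + 1)) (ent K k)
          (Cadd v (two (Cmul eta (RtoC (INR (k - 1))))))
          (Phi eta (Cadd lam (two (Cmul eta (ZtoC (sgn a))))) J J1 k) Lam)
       (seq 1 J)).
  2:{ apply map_ext_in. intros k Hk. apply in_seq in Hk.
      rewrite !istate_snoc by lia. rewrite !ent_snoc by lia.
      unfold J; rewrite Phi_snoc by lia. reflexivity. }
  simpl (map _ [S J]). simpl Cprod.
  replace (S J + 1)%nat with (S (S J)) by lia.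
  replace (seq 1 J ++ [S J]) with (seq 1 (S J)) by (rewrite seq_S; reflexivity).
  set (s := istate i1 J1 K (S J)).
  assert (E1: istate i1 (J1++[a]) (K++[b]) (S (S J)) = (s + b2Z a - b2Z b)%Z)
    by (unfold s, J; apply istate_last; auto).
  assert (E2: istate i1 (J1++[a]) (K++[b]) (S J) = s) by (unfold s; apply istate_snoc; lia).
  assert (E3: ent (J1++[a]) (S J) = a) by (unfold J; apply ent_last).
  assert (E4: ent (K++[b]) (S J) = b) by (rewrite HL; apply ent_last).
  replace (S (J + 1)) with (S (S J)) by lia.
  cbn [forallb]. rewrite E1, E2, E3, E4, andb_true_r.
  replace (J - 0)%nat with J by lia.
  replace (Phi eta lam (S J) (J1 ++ [a]) (S J)) with lam.
  2:{ unfold Phi. replace (S J - S J)%nat with 0%nat by lia. simpl.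
      apply Ceq; unfold two, ZtoC; simpl; ring. }
  remember (forallb (fun k => (0 <=? istate i1 J1 K k)%Z) (seq 1 (S J))) as F eqn:EF.
  assert (Hin : F = true -> (0 <= s)%Z).
  { intros HF. rewrite HF in EF. symmetry in EF. rewrite forallb_forall in EF. specialize (EF (S J)).
    assert (In (S J) (seq 1 (S J))) by (apply in_seq; lia). apply EF in H. lia. }
  destruct (Z.ltb_spec (Z.of_nat i2 + b2Z b - b2Z a) 0) as [Hz|Hz].
  - destruct F; cbn [andb]; auto.
    specialize (Hin eq_refl).
    destruct (Z.eqb_spec (s + b2Z a - b2Z b) (Z.of_nat i2)).
    + exfalso. lia.
    + rewrite andb_false_r. reflexivity.
  - destruct F; cbn [andb].
    + specialize (Hin eq_refl).
      destruct (Z.eqb_spec (s + b2Z a - b2Z b) (Z.of_nat i2)) as [Hs|Hs];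
      destruct (Z.eqb_spec s (Z.of_nat (Z.to_nat (Z.of_nat i2 + b2Z b - b2Z a)))) as [Hs'|Hs'];
      try (exfalso; lia).
      * replace (0 <=? s + b2Z a - b2Z b)%Z with true by (symmetry; apply Z.leb_le; lia).
        cbn [andb]. rewrite Hs. replace s with (Z.of_nat i2 + b2Z b - b2Z a)%Z by lia. apply Ceq; simpl; ring.
      * rewrite andb_false_r. apply Ceq; simpl; ring.
    + apply Ceq; simpl; ring.
Qed.

Lemma Csum_map_mul : forall (A : Type) (h : A -> Cplx) c l,
  Csum (map (fun x => Cmul (h x) c) l) = Cmul (Csum (map h l)) c.
Proof. induction l; simpl. - Cring. - rewrite IHl. Cring. Qed.

Lemma Csum_map_ext_in : forall (A : Type) (h g : A -> Cplx) l,
  (forall x, In x l -> h x = g x) -> Csum (map h l) = Csum (map g l).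
Proof. intros. f_equal. apply map_ext_in. auto. Qed.

Lemma filter_ext_in' : forall (A : Type) (p q : A -> bool) l,
  (forall x, In x l -> p x = q x) -> filter p l = filter q l.
Proof. induction l; simpl; intros; auto. rewrite H by auto. rewrite IHl; auto. Qed.

Lemma Perm_filter : forall (A : Type) (p : A -> bool) l1 l2,
  Permutation l1 l2 -> Permutation (filter p l1) (filter p l2).
Proof.
  intros A p l1 l2 H; induction H; simpl; auto.
  - destruct (p x); auto.
  - destruct (p x), (p y); auto. apply perm_swap.
  - eapply Permutation_trans; eauto.
Qed.

Lemma WJfused_snoc : forall f eta Lam J i1 j1 i2 K b v lam,
  length K = J ->
  WJfused_K f eta Lam (S J) i1 j1 i2 (K ++ [b]) v lam =
  Cadd
   (if (Z.of_nat i2 + b2Z b - b2Z false <? 0)%Z then Czero else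
    Cmul (WJfused_K f eta Lam J i1 j1 (Z.to_nat (Z.of_nat i2 + b2Z b - b2Z false)) K v
            (Cadd lam (two (Cmul eta (ZtoC (sgn false))))))
         (W1 f eta (Z.of_nat i2 + b2Z b - b2Z false) false (Z.of_nat i2) b
            (Cadd v (two (Cmul eta (RtoC (INR J))))) lam Lam))
   (match j1 with O => Czero | S j1' =>
    if (Z.of_nat i2 + b2Z b - b2Z true <? 0)%Z then Czero else
    Cmul (WJfused_K f eta Lam J i1 j1' (Z.to_nat (Z.of_nat i2 + b2Z b - b2Z true)) K v
            (Cadd lam (two (Cmul eta (ZtoC (sgn true))))))
         (W1 f eta (Z.of_nat i2 + b2Z b - b2Z true) true (Z.of_nat i2) b
            (Cadd v (two (Cmul eta (RtoC (INR J))))) lam Lam) end).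
Proof.
  intros f eta Lam J i1 j1 i2 K b v lam HK.
  unfold WJfused_K.
  rewrite (Csum_perm _ (map (fun J1 => WJcol f eta Lam (S J) i1 J1 i2 (K ++ [b]) v lam)
     (filter (fun l => Nat.eqb (ones l) j1)
        (map (snoc false) (bool_lists J) ++ map (snoc true) (bool_lists J))))).
  2:{ apply Permutation_map. apply Perm_filter. apply bool_lists_perm. }
  rewrite filter_app, map_app, Csum_app, !filter_map_snoc, !map_map.
  f_equal.
  - assert (E : forall l, In l (filter (fun l0 => Nat.eqb (ones (snoc false l0)) j1) (bool_lists J)) ->
      WJcol f eta Lam (S J) i1 (snoc false l) i2 (K ++ [b]) v lam =
      (if (Z.of_nat i2 + b2Z b - b2Z false <? 0)%Z then Czero else
       Cmul (WJcol f eta Lam J i1 l (Z.to_nat (Z.of_nat i2 + b2Z b - b2Z false)) K v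
            (Cadd lam (two (Cmul eta (ZtoC (sgn false))))))
         (W1 f eta (Z.of_nat i2 + b2Z b - b2Z false) false (Z.of_nat i2) b
            (Cadd v (two (Cmul eta (RtoC (INR J))))) lam Lam))).
    { intros l Hl. apply filter_In in Hl. destruct Hl as [Hl _]. apply bool_lists_len in Hl.
      unfold snoc. rewrite <- Hl. apply WJcol_snoc. congruence. }
    rewrite (Csum_map_ext_in _ _ _ _ E).
    destruct (Z.of_nat i2 + b2Z b - b2Z false <? 0)%Z.
    + clear E. induction (filter _ _); simpl; auto. rewrite IHl. Cring.
    + rewrite Csum_map_mul. f_equal. f_equal. f_equal. apply filter_ext_in'.
      intros x _. rewrite ones_snoc. f_equal. lia.
  - assert (E : forall l, In l (filter (fun l0 => Nat.eqb (ones (snoc true l0)) j1) (bool_lists J)) ->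
      WJcol f eta Lam (S J) i1 (snoc true l) i2 (K ++ [b]) v lam =
      (if (Z.of_nat i2 + b2Z b - b2Z true <? 0)%Z then Czero else
       Cmul (WJcol f eta Lam J i1 l (Z.to_nat (Z.of_nat i2 + b2Z b - b2Z true)) K v
            (Cadd lam (two (Cmul eta (ZtoC (sgn true))))))
         (W1 f eta (Z.of_nat i2 + b2Z b - b2Z true) true (Z.of_nat i2) b
            (Cadd v (two (Cmul eta (RtoC (INR J))))) lam Lam))).
    { intros l Hl. apply filter_In in Hl. destruct Hl as [Hl _]. apply bool_lists_len in Hl.
      unfold snoc. rewrite <- Hl. apply WJcol_snoc. congruence. }
    rewrite (Csum_map_ext_in _ _ _ _ E).
    destruct j1 as [|j1'].
    + replace (filter (fun l0 => Nat.eqb (ones (snoc true l0)) 0) (bool_lists J)) with (@nil (list bool)).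
      * reflexivity.
      * clear E. induction (bool_lists J); simpl; auto. rewrite ones_snoc.
        replace (ones a + 1)%nat with (S (ones a)) by lia. simpl. auto.
    + destruct (Z.of_nat i2 + b2Z b - b2Z true <? 0)%Z.
      * clear E. induction (filter _ _); simpl; auto. rewrite IHl. Cring.
      * rewrite Csum_map_mul. f_equal. f_equal. f_equal. apply filter_ext_in'.
        intros x _. rewrite ones_snoc. 
        replace (ones x + 1)%nat with (S (ones x)) by lia. reflexivity.
Qed.

Ltac Cring2 := apply Ceq; unfold two, Csub, Cdiv, ZtoC, RtoC in *; cbn [re im Cadd Cmul Copp Cinv Czero Cone];
  repeat first [rewrite minus_IZR | rewrite plus_IZR | rewrite opp_IZR | rewrite mult_IZR
               | rewrite <- INR_IZR_INZ | rewrite minus_INR by lia | rewrite plus_INR | rewrite S_INR]; ring.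

Section Alg.
Variable f : Cplx -> Cplx.
Variables eta Lam : Cplx.

Definition F0 (c : Z) := f (Cmul (two eta) (ZtoC c)).
Definition FL (c : Z) := f (Csub (Cmul (two eta) Lam) (Cmul (two eta) (ZtoC c))).
Definition Fl (lam : Cplx) (c : Z) := f (Cadd lam (Cmul (two eta) (ZtoC c))).
Definition FlL (lam : Cplx) (c : Z) := f (Csub (Cadd lam (Cmul (two eta) (ZtoC c))) (Cmul (two eta) Lam)).

Definition Pdn (g : Z -> Cplx) (c : Z) (k : nat) := Cprod (map (fun m => g (c - Z.of_nat m)%Z) (seq 0 k)).
Definition Pup (g : Z -> Cplx) (c : Z) (k : nat) := Cprod (map (fun m => g (c + Z.of_nat m)%Z) (seq 0 k)).

Lemma Pdn_0 : forall g c, Pdn g c 0 = Cone.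
Proof. reflexivity. Qed.
Lemma Pup_0 : forall g c, Pup g c 0 = Cone.
Proof. reflexivity. Qed.

Lemma seq_shift_map : forall (h : nat -> Cplx) k s, map h (seq (S s) k) = map (fun m => h (S m)) (seq s k).
Proof. induction k; intros; simpl; auto. f_equal. apply IHk. Qed.

Lemma Pdn_Sl : forall g c k, Pdn g c (S k) = Cmul (g c) (Pdn g (c - 1)%Z k).
Proof.
  intros. unfold Pdn. simpl. rewrite Z.sub_0_r. f_equal.
  rewrite seq_shift_map. f_equal. apply map_ext. intros m. f_equal. lia.
Qed.
Lemma Pdn_Sr : forall g c k, Pdn g c (S k) = Cmul (Pdn g c k) (g (c - Z.of_nat k)%Z).
Proof.
  intros. unfold Pdn. rewrite seq_S, map_app, Cprod_app. simpl. f_equal. apply Ceq; simpl; ring.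
Qed.
Lemma Pup_Sl : forall g c k, Pup g c (S k) = Cmul (g c) (Pup g (c + 1)%Z k).
Proof.
  intros. unfold Pup. simpl. rewrite Z.add_0_r. f_equal.
  rewrite seq_shift_map. f_equal. apply map_ext. intros m. f_equal. lia.
Qed.
Lemma Pup_Sr : forall g c k, Pup g c (S k) = Cmul (Pup g c k) (g (c + Z.of_nat k)%Z).
Proof.
  intros. unfold Pup. rewrite seq_S, map_app, Cprod_app. simpl. f_equal. apply Ceq; simpl; ring.
Qed.

Lemma Pdn_ext : forall g h c d k, (forall m, (0 <= m < Z.of_nat k)%Z -> g (c - m)%Z = h (d - m)%Z) ->
  Pdn g c k = Pdn h d k.
Proof.
  intros. unfold Pdn. f_equal. apply map_ext_in. intros m Hm. apply in_seq in Hm. apply H. lia.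
Qed.
Lemma Pup_ext : forall g h c d k, (forall m, (0 <= m < Z.of_nat k)%Z -> g (c + m)%Z = h (d + m)%Z) ->
  Pup g c k = Pup h d k.
Proof.
  intros. unfold Pup. f_equal. apply map_ext_in. intros m Hm. apply in_seq in Hm. apply H. lia.
Qed.

Lemma Cprod_nz : forall l, (forall x, In x l -> x <> Czero) -> Cprod l <> Czero.
Proof.
  induction l; simpl; intros.
  - exact Cone_neq.
  - intro E. assert (a <> Czero) by auto. assert (Cprod l <> Czero) by auto.
    apply H0. replace a with (Cmul (Cmul a (Cprod l)) (Cinv (Cprod l))).
    + rewrite E. Cring.
    + field. auto.
Qed.

Lemma Pdn_nz : forall g c k, (forall m, (0 <= m < Z.of_nat k)%Z -> g (c - m)%Z <> Czero) -> Pdn g c k <> Czero.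
Proof.
  intros. unfold Pdn. apply Cprod_nz. intros x Hx. apply in_map_iff in Hx.
  destruct Hx as [m [<- Hm]]. apply in_seq in Hm. apply H. lia.
Qed.
Lemma Pup_nz : forall g c k, (forall m, (0 <= m < Z.of_nat k)%Z -> g (c + m)%Z <> Czero) -> Pup g c k <> Czero.
Proof.
  intros. unfold Pup. apply Cprod_nz. intros x Hx. apply in_map_iff in Hx.
  destruct Hx as [m [<- Hm]]. apply in_seq in Hm. apply H. lia.
Qed.

Lemma Cprod_zero : forall l, In Czero l -> Cprod l = Czero.
Proof.
  induction l; simpl; intros; [contradiction|]. destruct H as [->|H].
  - Cring.
  - rewrite IHl by auto. Cring.
Qed.

Lemma Pdn_zero : forall g c k m, (0 <= m < Z.of_nat k)%Z -> g (c - m)%Z = Czero -> Pdn g c k = Czero.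
Proof.
  intros. unfold Pdn. apply Cprod_zero. apply in_map_iff. exists (Z.to_nat m). split.
  - rewrite Z2Nat.id by lia. auto.
  - apply in_seq. lia.
Qed.

Lemma Fl_shift : forall lam s c, Fl (Cadd lam (two (Cmul eta (ZtoC s)))) c = Fl lam (c + s)%Z.
Proof. intros. unfold Fl. f_equal. Cring2. Qed.
Lemma FlL_shift : forall lam s c, FlL (Cadd lam (two (Cmul eta (ZtoC s)))) c = FlL lam (c + s)%Z.
Proof. intros. unfold FlL. f_equal. Cring2. Qed.

Lemma Pdn_Fl_shift : forall lam s c k, Pdn (Fl (Cadd lam (two (Cmul eta (ZtoC s))))) c k = Pdn (Fl lam) (c + s)%Z k.
Proof. intros. apply Pdn_ext. intros. rewrite Fl_shift. f_equal. lia. Qed.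
Lemma Pdn_FlL_shift : forall lam s c k, Pdn (FlL (Cadd lam (two (Cmul eta (ZtoC s))))) c k = Pdn (FlL lam) (c + s)%Z k.
Proof. intros. apply Pdn_ext. intros. rewrite FlL_shift. f_equal. lia. Qed.

Lemma Cpowz_nat : forall a n, Cpowz a (Z.of_nat n) = Cpow a n.
Proof. intros. unfold Cpowz. replace (0 <=? Z.of_nat n)%Z with true by (symmetry; apply Z.leb_le; lia).
  rewrite Nat2Z.id. auto. Qed.

Lemma Cpow_nz : forall a n, a <> Czero -> Cpow a n <> Czero.
Proof.
  induction n; simpl; intros. - exact Cone_neq.
  - intro E. apply (IHn H). replace (Cpow a n) with (Cmul (Cinv a) (Cmul a (Cpow a n))) by (field; auto).
    rewrite E. Cring.
Qed.

Lemma Cpowz_S : forall a z, a <> Czero -> Cpowz a (z + 1) = Cmul a (Cpowz a z).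
Proof.
  intros a z Ha. unfold Cpowz.
  destruct (Z.leb_spec 0 z); destruct (Z.leb_spec 0 (z+1)); try lia.
  - replace (Z.to_nat (z + 1)) with (S (Z.to_nat z)) by lia. reflexivity.
  - assert (z = (-1))%Z by lia. subst. simpl. field. auto.
  - replace (Z.to_nat (- z)) with (S (Z.to_nat (- (z + 1)))) by lia. simpl.
    pose proof (Cpow_nz a (Z.to_nat (- (z + 1))) Ha). field. split; auto.
Qed.

Lemma Pdn_Sl' : forall g c c' k, c' = (c - 1)%Z -> Pdn g c (S k) = Cmul (g c) (Pdn g c' k).
Proof. intros; subst; apply Pdn_Sl. Qed.
Lemma Pdn_Sr' : forall g c c2 k, c2 = (c - Z.of_nat k)%Z -> Pdn g c (S k) = Cmul (Pdn g c k) (g c2).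
Proof. intros; subst; apply Pdn_Sr. Qed.
Lemma Pup_Sl' : forall g c c' k, c' = (c + 1)%Z -> Pup g c (S k) = Cmul (g c) (Pup g c' k).
Proof. intros; subst; apply Pup_Sl. Qed.
Lemma Pup_Sr' : forall g c c2 k, c2 = (c + Z.of_nat k)%Z -> Pup g c (S k) = Cmul (Pup g c k) (g c2).
Proof. intros; subst; apply Pup_Sr. Qed.
Lemma Pdn_arg : forall g c c' k, c = c' -> Pdn g c k = Pdn g c' k.
Proof. intros; subst; auto. Qed.
Lemma Pup_arg : forall g c c' k, c = c' -> Pup g c k = Pup g c' k.
Proof. intros; subst; auto. Qed.

Definition CB (N j : nat) := Cdiv (Pdn F0 (Z.of_nat N) N)
  (Cmul (Pdn F0 (Z.of_nat j) j) (Pdn F0 (Z.of_nat (N - j)) (N - j))).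

Definition Rc (N i1 j1 i2 j2 : nat) (lam : Cplx) :=
 Cmul (Cpowz (F0 1) (Z.of_nat i2 - Z.of_nat i1))
 (Cmul (CB N j1)
 (Cmul (Pdn F0 (Z.of_nat i1) j2)
 (Cmul (Cdiv (Pup FL (Z.of_nat i2) (N - j1)) (Pup FL 0 N))
 (Cdiv (Cmul (Pdn (Fl lam) (Z.of_nat i2) (N - j1)) (Pdn (FlL lam) (Z.of_nat i2 + Z.of_nat j1 - 1) j1))
       (Cmul (Pdn (Fl lam) (Z.of_nat j1) (N - j1)) (Pdn (Fl lam) (2 * Z.of_nat j1 - Z.of_nat N - 1) j1)))))).

Definition vJ (J : nat) := Cadd (Copp (Cmul eta Lam)) (two (Cmul eta (RtoC (INR J)))).

Lemma W1_00 : forall J k lam, (0 <= k)%Z ->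
  W1 f eta k false k false (vJ J) lam Lam =
  Cdiv (Cmul (FL (k + Z.of_nat J)) (Fl lam k)) (Cmul (FL (Z.of_nat J)) (Fl lam 0)).
Proof.
  intros. unfold W1. replace (0 <=? k)%Z with true by (symmetry; apply Z.leb_le; lia).
  rewrite Z.eqb_refl. unfold vJ, FL, Fl. f_equal; f_equal; f_equal; Cring2.
Qed.

Lemma W1_10 : forall J k lam, (0 <= k)%Z ->
  W1 f eta k true (k + 1) false (vJ J) lam Lam =
  Cdiv (Cmul (FlL lam (k + 1 + Z.of_nat J)) (F0 1)) (Cmul (FL (Z.of_nat J)) (Fl lam 0)).
Proof.
  intros. unfold W1. replace (0 <=? k)%Z with true by (symmetry; apply Z.leb_le; lia).
  rewrite Z.eqb_refl. unfold vJ, FL, Fl, FlL, F0. f_equal; f_equal; f_equal; Cring2.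
Qed.

Lemma W1_01 : forall J k lam, (1 <= k)%Z ->
  W1 f eta k false (k - 1) true (vJ J) lam Lam =
  Cdiv (Cmul (Cmul (Fl lam (k - 1 - Z.of_nat J)) (FL (k - 1))) (F0 k))
       (Cmul (Cmul (FL (Z.of_nat J)) (Fl lam 0)) (F0 1)).
Proof.
  intros. unfold W1. replace (0 <=? k)%Z with true by (symmetry; apply Z.leb_le; lia).
  rewrite Z.eqb_refl. replace (1 <=? k)%Z with true by (symmetry; apply Z.leb_le; lia). simpl.
  unfold vJ, FL, Fl, F0. f_equal; f_equal; f_equal; try f_equal; Cring2.
Qed.

Lemma W1_11 : forall J k lam, (0 <= k)%Z ->
  W1 f eta k true k true (vJ J) lam Lam =
  Cdiv (Cmul (F0 (k - Z.of_nat J)) (FlL lam k)) (Cmul (FL (Z.of_nat J)) (Fl lam 0)).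
Proof.
  intros. unfold W1. replace (0 <=? k)%Z with true by (symmetry; apply Z.leb_le; lia).
  rewrite Z.eqb_refl. unfold vJ, FL, Fl, FlL, F0. f_equal; f_equal; f_equal; Cring2.
Qed.
End Alg.


Lemma Cmul_integral : forall a b, Cmul a b = Czero -> a = Czero \/ b = Czero.
Proof.
  intros [a1 a2] [b1 b2] H. injection H as H1 H2.
  destruct (Req_dec a1 0); destruct (Req_dec a2 0).
  - left; subst; reflexivity.
  - right. assert (b1 = 0) by nra. assert (b2 = 0) by nra. subst; reflexivity.
  - right. assert (b1 = 0) by nra. assert (b2 = 0) by nra. subst; reflexivity.
  - right. assert (b1 * (a1*a1 + a2*a2) = 0) by nra. assert (b2 * (a1*a1+a2*a2) = 0) by nra.
    assert (a1*a1 + a2*a2 <> 0) by nra.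
    assert (b1 = 0). { apply Rmult_integral in H3. destruct H3; auto. contradiction. }
    assert (b2 = 0). { apply Rmult_integral in H4. destruct H4; auto. contradiction. }
    subst; reflexivity.
Qed.

Section Props.
Variable f : Cplx -> Cplx.
Variables A B : Cplx -> Cplx.
Hypothesis Hprod : forall x y, Cmul (f (Cadd x y)) (f (Csub x y)) = Csub (Cmul (A x) (B y)) (Cmul (B x) (A y)).

Lemma f_zero : f Czero = Czero.
Proof.
  pose proof (Hprod Czero Czero) as H.
  replace (Cadd Czero Czero) with Czero in H by Cring.
  replace (Csub Czero Czero) with Czero in H by Cring.
  replace (Csub (Cmul (A Czero) (B Czero)) (Cmul (B Czero) (A Czero))) with Czero in H by ring.
  apply Cmul_integral in H. destruct H; auto.
Qed.

Lemma f_sq : forall z, Cmul (f z) (f (Copp z)) = Copp (Cmul (f z) (f z)).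
Proof.
  intros z. pose proof (Hprod Czero z) as H1. pose proof (Hprod z Czero) as H2.
  replace (Cadd Czero z) with z in H1 by Cring. replace (Csub Czero z) with (Copp z) in H1 by Cring.
  replace (Cadd z Czero) with z in H2 by Cring. replace (Csub z Czero) with z in H2 by Cring.
  rewrite H1, H2. ring.
Qed.

Lemma f_odd : forall z, f (Copp z) = Copp (f z).
Proof.
  intros z. pose proof (f_sq z) as H1. pose proof (f_sq (Copp z)) as H2.
  replace (Copp (Copp z)) with z in H2 by Cring.
  destruct (Cmul_integral (f z) (Cadd (f (Copp z)) (f z))) as [E|E].
  - replace (Cmul (f z) (Cadd (f (Copp z)) (f z))) with
      (Cadd (Cmul (f z) (f (Copp z))) (Cmul (f z) (f z))) by ring.
    rewrite H1. ring.
  - rewrite E in *. assert (Cmul (f (Copp z)) (f (Copp z)) = Czero).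
    { replace (Cmul (f (Copp z)) (f (Copp z))) with (Copp (Cmul (f (Copp z)) Czero)).
      - ring.
      - rewrite H2. ring. }
    apply Cmul_integral in H. destruct H as [H|H]; rewrite H; ring.
  - replace (f (Copp z)) with (Csub (Cadd (f (Copp z)) (f z)) (f z)) by ring. rewrite E. ring.
Qed.

Lemma W3 : forall x y u v,
  Cmul (Cmul (f (Cadd x y)) (f (Csub x y))) (Cmul (f (Cadd u v)) (f (Csub u v))) =
  Csub (Cmul (Cmul (f (Cadd x u)) (f (Csub x u))) (Cmul (f (Cadd y v)) (f (Csub y v))))
       (Cmul (Cmul (f (Cadd x v)) (f (Csub x v))) (Cmul (f (Cadd y u)) (f (Csub y u)))).
Proof. intros. rewrite !Hprod. ring. Qed.

Variables eta Lam : Cplx.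

Lemma tri_b1 : forall (N j1 i2 : Z) lam,
  Cmul (Cmul (F0 f eta N) (F0 f eta (i2 - j1 + 1))) (Cmul (Fl f eta lam (i2 + j1 - N + 1)) (Fl f eta lam 0)) =
  Cadd (Cmul (Cmul (F0 f eta (N - j1)) (F0 f eta (i2 + 1))) (Cmul (Fl f eta lam j1) (Fl f eta lam (i2 - N + 1))))
       (Cmul (Cmul (F0 f eta j1) (F0 f eta (i2 - N + 1))) (Cmul (Fl f eta lam (i2 + 1)) (Fl f eta lam (j1 - N)))).
Proof.
  intros.
  pose proof (W3 (Cmul eta (ZtoC (N + i2 - j1 + 1))) (Cmul eta (ZtoC (N - i2 + j1 - 1))) (Cadd lam (Cmul eta (ZtoC (i2 + j1 - N + 1)))) (Cmul eta (ZtoC (i2 + j1 - N + 1)))) as H.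
  replace (f (Cadd (Cmul eta (ZtoC (N + i2 - j1 + 1))) (Cmul eta (ZtoC (N - i2 + j1 - 1))))) with (F0 f eta (N)) in H by (unfold F0, FL, Fl, FlL; first [f_equal; Cring2 | rewrite <- f_odd; f_equal; Cring2]).
  replace (f (Csub (Cmul eta (ZtoC (N + i2 - j1 + 1))) (Cmul eta (ZtoC (N - i2 + j1 - 1))))) with (F0 f eta (i2 - j1 + 1)) in H by (unfold F0, FL, Fl, FlL; first [f_equal; Cring2 | rewrite <- f_odd; f_equal; Cring2]).
  replace (f (Cadd (Cadd lam (Cmul eta (ZtoC (i2 + j1 - N + 1)))) (Cmul eta (ZtoC (i2 + j1 - N + 1))))) with (Fl f eta lam (i2 + j1 - N + 1)) in H by (unfold F0, FL, Fl, FlL; first [f_equal; Cring2 | rewrite <- f_odd; f_equal; Cring2]).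
  replace (f (Csub (Cadd lam (Cmul eta (ZtoC (i2 + j1 - N + 1)))) (Cmul eta (ZtoC (i2 + j1 - N + 1))))) with (Fl f eta lam (0)) in H by (unfold F0, FL, Fl, FlL; first [f_equal; Cring2 | rewrite <- f_odd; f_equal; Cring2]).
  replace (f (Cadd (Cmul eta (ZtoC (N + i2 - j1 + 1))) (Cadd lam (Cmul eta (ZtoC (i2 + j1 - N + 1)))))) with (Fl f eta lam (i2 + 1)) in H by (unfold F0, FL, Fl, FlL; first [f_equal; Cring2 | rewrite <- f_odd; f_equal; Cring2]).
  replace (f (Csub (Cmul eta (ZtoC (N + i2 - j1 + 1))) (Cadd lam (Cmul eta (ZtoC (i2 + j1 - N + 1)))))) with (Copp (Fl f eta lam (j1 - N))) in H by (unfold F0, FL, Fl, FlL; first [f_equal; Cring2 | rewrite <- f_odd; f_equal; Cring2]).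
  replace (f (Cadd (Cmul eta (ZtoC (N - i2 + j1 - 1))) (Cmul eta (ZtoC (i2 + j1 - N + 1))))) with (F0 f eta (j1)) in H by (unfold F0, FL, Fl, FlL; first [f_equal; Cring2 | rewrite <- f_odd; f_equal; Cring2]).
  replace (f (Csub (Cmul eta (ZtoC (N - i2 + j1 - 1))) (Cmul eta (ZtoC (i2 + j1 - N + 1))))) with (Copp (F0 f eta (i2 - N + 1))) in H by (unfold F0, FL, Fl, FlL; first [f_equal; Cring2 | rewrite <- f_odd; f_equal; Cring2]).
  replace (f (Cadd (Cmul eta (ZtoC (N + i2 - j1 + 1))) (Cmul eta (ZtoC (i2 + j1 - N + 1))))) with (F0 f eta (i2 + 1)) in H by (unfold F0, FL, Fl, FlL; first [f_equal; Cring2 | rewrite <- f_odd; f_equal; Cring2]).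
  replace (f (Csub (Cmul eta (ZtoC (N + i2 - j1 + 1))) (Cmul eta (ZtoC (i2 + j1 - N + 1))))) with (F0 f eta (N - j1)) in H by (unfold F0, FL, Fl, FlL; first [f_equal; Cring2 | rewrite <- f_odd; f_equal; Cring2]).
  replace (f (Cadd (Cmul eta (ZtoC (N - i2 + j1 - 1))) (Cadd lam (Cmul eta (ZtoC (i2 + j1 - N + 1)))))) with (Fl f eta lam (j1)) in H by (unfold F0, FL, Fl, FlL; first [f_equal; Cring2 | rewrite <- f_odd; f_equal; Cring2]).
  replace (f (Csub (Cmul eta (ZtoC (N - i2 + j1 - 1))) (Cadd lam (Cmul eta (ZtoC (i2 + j1 - N + 1)))))) with (Copp (Fl f eta lam (i2 - N + 1))) in H by (unfold F0, FL, Fl, FlL; first [f_equal; Cring2 | rewrite <- f_odd; f_equal; Cring2]).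
  rewrite H. ring.
Qed.

Lemma tri_b0 : forall (N j1 i2 : Z) lam,
  Cmul (Cmul (F0 f eta N) (FL f eta Lam (i2 + N - 1 - j1))) (Cmul (FlL f eta Lam lam (i2 + j1 - 1)) (Fl f eta lam 0)) =
  Cadd (Cmul (Cmul (F0 f eta (N - j1)) (FL f eta Lam (i2 + N - 1))) (Cmul (FlL f eta Lam lam (i2 - 1)) (Fl f eta lam j1)))
       (Cmul (Cmul (F0 f eta j1) (FL f eta Lam (i2 - 1))) (Cmul (Fl f eta lam (j1 - N)) (FlL f eta Lam lam (i2 + N - 1)))).
Proof.
  intros.
  pose proof (W3 (Cmul eta (Cadd Lam (ZtoC (1 - i2 + j1)))) (Cmul eta (Csub (ZtoC (2 * N - 1 + i2 - j1)) Lam)) (Cadd lam (Cmul eta (Csub (ZtoC (i2 + j1 - 1)) Lam))) (Cmul eta (Csub (ZtoC (i2 + j1 - 1)) Lam))) as H.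
  replace (f (Cadd (Cmul eta (Cadd Lam (ZtoC (1 - i2 + j1)))) (Cmul eta (Csub (ZtoC (2 * N - 1 + i2 - j1)) Lam)))) with (F0 f eta (N)) in H by (unfold F0, FL, Fl, FlL; first [f_equal; Cring2 | rewrite <- f_odd; f_equal; Cring2]).
  replace (f (Csub (Cmul eta (Cadd Lam (ZtoC (1 - i2 + j1)))) (Cmul eta (Csub (ZtoC (2 * N - 1 + i2 - j1)) Lam)))) with (FL f eta Lam (i2 + N - 1 - j1)) in H by (unfold F0, FL, Fl, FlL; first [f_equal; Cring2 | rewrite <- f_odd; f_equal; Cring2]).
  replace (f (Cadd (Cadd lam (Cmul eta (Csub (ZtoC (i2 + j1 - 1)) Lam))) (Cmul eta (Csub (ZtoC (i2 + j1 - 1)) Lam)))) with (FlL f eta Lam lam (i2 + j1 - 1)) in H by (unfold F0, FL, Fl, FlL; first [f_equal; Cring2 | rewrite <- f_odd; f_equal; Cring2]).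
  replace (f (Csub (Cadd lam (Cmul eta (Csub (ZtoC (i2 + j1 - 1)) Lam))) (Cmul eta (Csub (ZtoC (i2 + j1 - 1)) Lam)))) with (Fl f eta lam (0)) in H by (unfold F0, FL, Fl, FlL; first [f_equal; Cring2 | rewrite <- f_odd; f_equal; Cring2]).
  replace (f (Cadd (Cmul eta (Cadd Lam (ZtoC (1 - i2 + j1)))) (Cadd lam (Cmul eta (Csub (ZtoC (i2 + j1 - 1)) Lam))))) with (Fl f eta lam (j1)) in H by (unfold F0, FL, Fl, FlL; first [f_equal; Cring2 | rewrite <- f_odd; f_equal; Cring2]).
  replace (f (Csub (Cmul eta (Cadd Lam (ZtoC (1 - i2 + j1)))) (Cadd lam (Cmul eta (Csub (ZtoC (i2 + j1 - 1)) Lam))))) with (Copp (FlL f eta Lam lam (i2 - 1))) in H by (unfold F0, FL, Fl, FlL; first [f_equal; Cring2 | rewrite <- f_odd; f_equal; Cring2]).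
  replace (f (Cadd (Cmul eta (Csub (ZtoC (2 * N - 1 + i2 - j1)) Lam)) (Cmul eta (Csub (ZtoC (i2 + j1 - 1)) Lam)))) with (Copp (FL f eta Lam (i2 + N - 1))) in H by (unfold F0, FL, Fl, FlL; first [f_equal; Cring2 | rewrite <- f_odd; f_equal; Cring2]).
  replace (f (Csub (Cmul eta (Csub (ZtoC (2 * N - 1 + i2 - j1)) Lam)) (Cmul eta (Csub (ZtoC (i2 + j1 - 1)) Lam)))) with (F0 f eta (N - j1)) in H by (unfold F0, FL, Fl, FlL; first [f_equal; Cring2 | rewrite <- f_odd; f_equal; Cring2]).
  replace (f (Cadd (Cmul eta (Cadd Lam (ZtoC (1 - i2 + j1)))) (Cmul eta (Csub (ZtoC (i2 + j1 - 1)) Lam)))) with (F0 f eta (j1)) in H by (unfold F0, FL, Fl, FlL; first [f_equal; Cring2 | rewrite <- f_odd; f_equal; Cring2]).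
  replace (f (Csub (Cmul eta (Cadd Lam (ZtoC (1 - i2 + j1)))) (Cmul eta (Csub (ZtoC (i2 + j1 - 1)) Lam)))) with (FL f eta Lam (i2 - 1)) in H by (unfold F0, FL, Fl, FlL; first [f_equal; Cring2 | rewrite <- f_odd; f_equal; Cring2]).
  replace (f (Cadd (Cmul eta (Csub (ZtoC (2 * N - 1 + i2 - j1)) Lam)) (Cadd lam (Cmul eta (Csub (ZtoC (i2 + j1 - 1)) Lam))))) with (FlL f eta Lam lam (i2 + N - 1)) in H by (unfold F0, FL, Fl, FlL; first [f_equal; Cring2 | rewrite <- f_odd; f_equal; Cring2]).
  replace (f (Csub (Cmul eta (Csub (ZtoC (2 * N - 1 + i2 - j1)) Lam)) (Cadd lam (Cmul eta (Csub (ZtoC (i2 + j1 - 1)) Lam))))) with (Copp (Fl f eta lam (j1 - N))) in H by (unfold F0, FL, Fl, FlL; first [f_equal; Cring2 | rewrite <- f_odd; f_equal; Cring2]).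
  rewrite H. ring.
Qed.

End Props.

Ltac unify1 :=
  match goal with
  | |- context [F0 ?f ?e ?a] => match goal with |- context [F0 f e ?b] =>
      assert_fails (constr_eq a b); replace (F0 f e b) with (F0 f e a) by (f_equal; lia) end
  | |- context [FL ?f ?e ?L ?a] => match goal with |- context [FL f e L ?b] =>
      assert_fails (constr_eq a b); replace (FL f e L b) with (FL f e L a) by (f_equal; lia) end
  | |- context [Fl ?f ?e ?l ?a] => match goal with |- context [Fl f e l ?b] =>
      assert_fails (constr_eq a b); replace (Fl f e l b) with (Fl f e l a) by (f_equal; lia) end
  | |- context [FlL ?f ?e ?L ?l ?a] => match goal with |- context [FlL f e L l ?b] =>
      assert_fails (constr_eq a b); replace (FlL f e L l b) with (FlL f e L l a) by (f_equal; lia) end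
  | |- context [Pdn ?g ?a ?k] => match goal with |- context [Pdn g ?b ?k'] =>
      assert_fails (constr_eq a b); replace (Pdn g b k') with (Pdn g a k) by (f_equal; lia) end
  | |- context [Pup ?g ?a ?k] => match goal with |- context [Pup g ?b ?k'] =>
      assert_fails (constr_eq a b); replace (Pup g b k') with (Pup g a k) by (f_equal; lia) end
  | |- context [Cpowz ?g ?a] => match goal with |- context [Cpowz g ?b] =>
      assert_fails (constr_eq a b); replace (Cpowz g b) with (Cpowz g a) by (f_equal; lia) end
  end.
Ltac unify_atoms := repeat unify1.

Section Main.
Variable f : Cplx -> Cplx.
Variables A B : Cplx -> Cplx.
Hypothesis Hprod : forall x y, Cmul (f (Cadd x y)) (f (Csub x y)) = Csub (Cmul (A x) (B y)) (Cmul (B x) (A y)).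
Variables eta Lam : Cplx.

Section Case.
Variable N : nat.
Variable lam : Cplx.
Hypothesis HF0 : forall c, (1 <= c <= Z.of_nat N)%Z -> F0 f eta c <> Czero.
Hypothesis HFL : forall c, (0 <= c < Z.of_nat N)%Z -> FL f eta Lam c <> Czero.
Hypothesis HFl : forall c, (- Z.of_nat N <= c <= Z.of_nat N)%Z -> Fl f eta lam c <> Czero.

Ltac nz := first
  [ apply HF0; lia | apply HFL; lia | apply HFl; lia
  | apply Pdn_nz; intros; first [apply HF0; lia | apply HFL; lia | apply HFl; lia]
  | apply Pup_nz; intros; first [apply HF0; lia | apply HFL; lia | apply HFl; lia] ].

Definition lamf := Cadd lam (two (Cmul eta (ZtoC (sgn false)))).
Definition lamt := Cadd lam (two (Cmul eta (ZtoC (sgn true)))).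
Definition W00f (J : nat) (k : Z) := Cdiv (Cmul (FL f eta Lam (k + Z.of_nat J)) (Fl f eta lam k))
   (Cmul (FL f eta Lam (Z.of_nat J)) (Fl f eta lam 0)).
Definition W10f (J : nat) (k : Z) := Cdiv (Cmul (FlL f eta Lam lam (k + 1 + Z.of_nat J)) (F0 f eta 1))
   (Cmul (FL f eta Lam (Z.of_nat J)) (Fl f eta lam 0)).
Definition W01f (J : nat) (k : Z) := Cdiv (Cmul (Cmul (Fl f eta lam (k - 1 - Z.of_nat J)) (FL f eta Lam (k - 1))) (F0 f eta k))
   (Cmul (Cmul (FL f eta Lam (Z.of_nat J)) (Fl f eta lam 0)) (F0 f eta 1)).
Definition W11f (J : nat) (k : Z) := Cdiv (Cmul (F0 f eta (k - Z.of_nat J)) (FlL f eta Lam lam k))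
   (Cmul (FL f eta Lam (Z.of_nat J)) (Fl f eta lam 0)).

Lemma case_b0_j0 : forall J i1 i2 j2, N = S J ->
  Cmul (Rc f eta Lam J i1 0 i2 j2 lamf) (W00f J (Z.of_nat i2)) = Rc f eta Lam N i1 0 i2 j2 lam.
Proof.
  intros J i1 i2 j2 HN. subst N. unfold Rc, CB, lamf, W00f.
  rewrite !Pdn_Fl_shift, !Pdn_FlL_shift. unfold sgn.
  replace (S J - 0)%nat with (S J) by lia. replace (J - 0)%nat with J by lia.
  rewrite (Pup_Sr' (FL f eta Lam) (Z.of_nat i2) (Z.of_nat i2 + Z.of_nat J) J) by lia.
  rewrite (Pup_Sr' (FL f eta Lam) 0 (Z.of_nat J) J) by lia.
  rewrite (Pdn_Sl' (Fl f eta lam) (Z.of_nat i2) (Z.of_nat i2 - 1) J) by lia.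
  rewrite (Pdn_Sl' (Fl f eta lam) (Z.of_nat 0) (-1) J) by lia.
  rewrite !Pdn_0.
  unify_atoms. field. repeat split; nz.
Qed.

Lemma case_b0_jN : forall J i1 i2' j2, N = S J ->
  Cmul (Rc f eta Lam J i1 J i2' j2 lamt) (W10f J (Z.of_nat i2')) = Rc f eta Lam N i1 (S J) (S i2') j2 lam.
Proof.
  intros J i1 i2' j2 HN. subst N. unfold Rc, CB, lamt, W10f.
  rewrite !Pdn_Fl_shift, !Pdn_FlL_shift. unfold sgn.
  rewrite !Nat.sub_diag, !Pdn_0, !Pup_0.
  rewrite (Pup_Sr' (FL f eta Lam) 0 (Z.of_nat J) J) by lia.
  rewrite (Pdn_Sl' (FlL f eta Lam lam) (Z.of_nat (S i2') + Z.of_nat (S J) - 1) (Z.of_nat i2' + Z.of_nat J) J) by lia.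
  rewrite (Pdn_Sr' (Fl f eta lam) (2 * Z.of_nat (S J) - Z.of_nat (S J) - 1) 0 J) by lia.
  replace (Z.of_nat (S i2') - Z.of_nat i1)%Z with ((Z.of_nat i2' - Z.of_nat i1) + 1)%Z by lia.
  rewrite Cpowz_S by (apply HF0; lia).
  unify_atoms. field. repeat split; nz.
Qed.

Lemma case_b1_j0 : forall J i1 i2 j2', N = S J -> (i1 = i2 + S j2')%nat ->
  Cmul (Rc f eta Lam J i1 0 (S i2) j2' lamf) (W01f J (Z.of_nat (S i2))) = Rc f eta Lam N i1 0 i2 (S j2') lam.
Proof.
  intros J i1 i2 j2' HN Hc. subst N. unfold Rc, CB, lamf, W01f.
  rewrite !Pdn_Fl_shift, !Pdn_FlL_shift. unfold sgn.
  replace (S J - 0)%nat with (S J) by lia. replace (J - 0)%nat with J by lia.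
  rewrite (Pdn_Sr' (F0 f eta) (Z.of_nat i1) (Z.of_nat i1 - Z.of_nat j2') j2') by lia.
  rewrite (Pup_Sl' (FL f eta Lam) (Z.of_nat i2) (Z.of_nat (S i2)) J) by lia.
  rewrite (Pup_Sr' (FL f eta Lam) 0 (Z.of_nat J) J) by lia.
  rewrite (Pdn_Sr' (Fl f eta lam) (Z.of_nat i2) (Z.of_nat i2 - Z.of_nat J) J) by lia.
  rewrite (Pdn_Sl' (Fl f eta lam) (Z.of_nat 0) (-1) J) by lia.
  rewrite !Pdn_0.
  replace (Z.of_nat (S i2) - Z.of_nat i1)%Z with ((Z.of_nat i2 - Z.of_nat i1) + 1)%Z by lia.
  rewrite Cpowz_S by (apply HF0; lia).
  unify_atoms. field. repeat split; nz.
Qed.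

Lemma case_b1_jN : forall J i1 i2 j2', N = S J -> (i1 + S J = i2 + S j2')%nat ->
  Cmul (Rc f eta Lam J i1 J i2 j2' lamt) (W11f J (Z.of_nat i2)) = Rc f eta Lam N i1 (S J) i2 (S j2') lam.
Proof.
  intros J i1 i2 j2' HN Hc. subst N. unfold Rc, CB, lamt, W11f.
  rewrite !Pdn_Fl_shift, !Pdn_FlL_shift. unfold sgn.
  rewrite !Nat.sub_diag, !Pdn_0, !Pup_0.
  rewrite (Pdn_Sr' (F0 f eta) (Z.of_nat i1) (Z.of_nat i1 - Z.of_nat j2') j2') by lia.
  rewrite (Pup_Sr' (FL f eta Lam) 0 (Z.of_nat J) J) by lia.
  rewrite (Pdn_Sr' (FlL f eta Lam lam) (Z.of_nat i2 + Z.of_nat (S J) - 1) (Z.of_nat i2) J) by lia.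
  rewrite (Pdn_Sr' (Fl f eta lam) (2 * Z.of_nat (S J) - Z.of_nat (S J) - 1) 0 J) by lia.
  unify_atoms. field. repeat split; nz.
Qed.

Lemma case_b1_int : forall J j1' d i1 i2 j2',
  N = S J -> J = S (j1' + d) -> (i1 + S j1' = i2 + S j2')%nat ->
  Cadd (Cmul (Rc f eta Lam J i1 (S j1') (S i2) j2' lamf) (W01f J (Z.of_nat (S i2))))
       (Cmul (Rc f eta Lam J i1 j1' i2 j2' lamt) (W11f J (Z.of_nat i2)))
  = Rc f eta Lam N i1 (S j1') i2 (S j2') lam.
Proof.
  intros J j1' d i1 i2 j2' HN HJ Hc. subst N.
  unfold Rc, CB, lamf, lamt, W01f, W11f.
  rewrite !Pdn_Fl_shift, !Pdn_FlL_shift. unfold sgn.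
  replace (S J - S j1')%nat with (S d) by lia.
  replace (J - S j1')%nat with d by lia.
  replace (J - j1')%nat with (S d) by lia.
  rewrite (Pdn_Sl' (F0 f eta) (Z.of_nat (S J)) (Z.of_nat J) J) by lia.
  rewrite (Pdn_Sl' (F0 f eta) (Z.of_nat (S j1')) (Z.of_nat j1') j1') by lia.
  rewrite (Pdn_Sl' (F0 f eta) (Z.of_nat (S d)) (Z.of_nat d) d) by lia.
  rewrite (Pdn_Sr' (F0 f eta) (Z.of_nat i1) (Z.of_nat i1 - Z.of_nat j2') j2') by lia.
  rewrite (Pup_Sl' (FL f eta Lam) (Z.of_nat i2) (Z.of_nat (S i2)) d) by lia.
  rewrite (Pup_Sr' (FL f eta Lam) 0 (Z.of_nat J) J) by lia.
  rewrite (Pdn_Sr' (Fl f eta lam) (Z.of_nat i2) (Z.of_nat i2 - Z.of_nat d) d) by lia.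
  rewrite (Pdn_Sr' (FlL f eta Lam lam) (Z.of_nat i2 + Z.of_nat (S j1') - 1) (Z.of_nat i2) j1') by lia.
  rewrite (Pdn_Sl' (Fl f eta lam) (Z.of_nat (S j1')) (Z.of_nat j1') d) by lia.
  rewrite (Pdn_Sr' (Fl f eta lam) (2 * Z.of_nat (S j1') - Z.of_nat (S J) - 1) (Z.of_nat (S j1') - Z.of_nat (S J)) j1') by lia.
  rewrite (Pdn_Sr' (FlL f eta Lam lam) (Z.of_nat (S i2) + Z.of_nat (S j1') - 1 + -1) (Z.of_nat i2) j1') by lia.
  rewrite (Pdn_Sr' (Fl f eta lam) (2 * Z.of_nat (S j1') - Z.of_nat J - 1 + -1) (Z.of_nat (S j1') - Z.of_nat (S J)) j1') by lia.
  replace (Z.of_nat (S i2) - Z.of_nat i1)%Z with ((Z.of_nat i2 - Z.of_nat i1) + 1)%Z by lia.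
  rewrite Cpowz_S by (apply HF0; lia).
  rewrite (Pdn_Sl' (Fl f eta lam) (Z.of_nat i2 + 1) (Z.of_nat i2) d) by lia.
  rewrite (Pdn_Sl' (Fl f eta lam) (Z.of_nat j1' + 1) (Z.of_nat j1') d) by lia.
  pose proof (tri_b1 f A B Hprod eta (Z.of_nat (S J)) (Z.of_nat (S j1')) (Z.of_nat i2) lam) as T.
  set (X := Cdiv (Cmul (Cmul (Cpowz (F0 f eta 1) (Z.of_nat i2 - Z.of_nat i1))
                   (Cmul (Pdn (F0 f eta) (Z.of_nat J) J) (Pdn (F0 f eta) (Z.of_nat i1) j2')))
             (Cmul (Cmul (FL f eta Lam (Z.of_nat i2)) (Pup (FL f eta Lam) (Z.of_nat (S i2)) d))
                   (Cmul (Cmul (Pdn (Fl f eta lam) (Z.of_nat i2) d) (Pdn (FlL f eta Lam lam) (Z.of_nat i2 + Z.of_nat (S j1') - 1) j1'))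
                         (FlL f eta Lam lam (Z.of_nat i2)))))
        (Cmul (Cmul (Cmul (F0 f eta (Z.of_nat (S j1'))) (Pdn (F0 f eta) (Z.of_nat j1') j1'))
                    (Cmul (F0 f eta (Z.of_nat (S d))) (Pdn (F0 f eta) (Z.of_nat d) d)))
              (Cmul (Cmul (Pup (FL f eta Lam) 0 J) (FL f eta Lam (Z.of_nat J)))
                    (Cmul (Cmul (Fl f eta lam (Z.of_nat (S j1'))) (Pdn (Fl f eta lam) (Z.of_nat j1') d))
                          (Cmul (Pdn (Fl f eta lam) (2 * Z.of_nat (S j1') - Z.of_nat (S J) - 1) j1')
                                (Cmul (Fl f eta lam (Z.of_nat (S j1') - Z.of_nat (S J))) (Fl f eta lam 0))))))).
  match type of T with ?L = _ => transitivity (Cmul X L) end.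
  - rewrite T. unfold X. unify_atoms. field. repeat split; nz.
  - unfold X. unify_atoms. field. repeat split; nz.
Qed.

Lemma case_b0_int : forall J j1' d i1 i2' j2,
  N = S J -> J = S (j1' + d) -> (i1 + S j1' = S i2' + j2)%nat ->
  Cadd (Cmul (Rc f eta Lam J i1 (S j1') (S i2') j2 (Cadd lam (two (Cmul eta (ZtoC (sgn false))))))
             (Cdiv (Cmul (FL f eta Lam (Z.of_nat (S i2') + Z.of_nat J)) (Fl f eta lam (Z.of_nat (S i2'))))
                   (Cmul (FL f eta Lam (Z.of_nat J)) (Fl f eta lam 0))))
       (Cmul (Rc f eta Lam J i1 j1' i2' j2 (Cadd lam (two (Cmul eta (ZtoC (sgn true))))))
             (Cdiv (Cmul (FlL f eta Lam lam (Z.of_nat i2' + 1 + Z.of_nat J)) (F0 f eta 1))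
                   (Cmul (FL f eta Lam (Z.of_nat J)) (Fl f eta lam 0))))
  = Rc f eta Lam N i1 (S j1') (S i2') j2 lam.
Proof.
  intros J j1' d i1 i2' j2 HN HJ Hc. subst N.
  unfold Rc, CB.
  rewrite !Pdn_Fl_shift, !Pdn_FlL_shift. unfold sgn.
  replace (S J - S j1')%nat with (S d) by lia.
  replace (J - S j1')%nat with d by lia.
  replace (J - j1')%nat with (S d) by lia.
  rewrite (Pdn_Sl' (F0 f eta) (Z.of_nat (S J)) (Z.of_nat J) J) by lia.
  rewrite (Pdn_Sl' (F0 f eta) (Z.of_nat (S j1')) (Z.of_nat j1') j1') by lia.
  rewrite (Pdn_Sl' (F0 f eta) (Z.of_nat (S d)) (Z.of_nat d) d) by lia.
  rewrite (Pup_Sr' (FL f eta Lam) (Z.of_nat (S i2')) (Z.of_nat (S i2') + Z.of_nat d) d) by lia.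
  rewrite (Pup_Sr' (FL f eta Lam) 0 (Z.of_nat J) J) by lia.
  rewrite (Pdn_Sl' (Fl f eta lam) (Z.of_nat (S i2')) (Z.of_nat i2') d) by lia.
  rewrite (Pdn_Sl' (FlL f eta Lam lam) (Z.of_nat (S i2') + Z.of_nat (S j1') - 1) (Z.of_nat i2' + Z.of_nat j1') j1') by lia.
  rewrite (Pdn_Sl' (Fl f eta lam) (Z.of_nat (S j1')) (Z.of_nat j1') d) by lia.
  rewrite (Pdn_Sr' (Fl f eta lam) (2 * Z.of_nat (S j1') - Z.of_nat (S J) - 1) (Z.of_nat (S j1') - Z.of_nat (S J)) j1') by lia.
  rewrite (Pdn_Sr' (FlL f eta Lam lam) (Z.of_nat (S i2') + Z.of_nat (S j1') - 1 + -1) (Z.of_nat i2') j1') by lia.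
  rewrite (Pdn_Sr' (Fl f eta lam) (2 * Z.of_nat (S j1') - Z.of_nat J - 1 + -1) (Z.of_nat (S j1') - Z.of_nat (S J)) j1') by lia.
  rewrite (Pup_Sl' (FL f eta Lam) (Z.of_nat i2') (Z.of_nat (S i2')) d) by lia.
  rewrite (Pdn_Sl' (Fl f eta lam) (Z.of_nat i2' + 1) (Z.of_nat i2') d) by lia.
  rewrite (Pdn_Sl' (Fl f eta lam) (Z.of_nat j1' + 1) (Z.of_nat j1') d) by lia.
  replace (Z.of_nat (S i2') - Z.of_nat i1)%Z with ((Z.of_nat i2' - Z.of_nat i1) + 1)%Z by lia.
  rewrite Cpowz_S by (apply HF0; lia).
  pose proof (tri_b0 f A B Hprod eta Lam (Z.of_nat (S J)) (Z.of_nat (S j1')) (Z.of_nat (S i2')) lam) as T.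
  set (X := Cdiv (Cmul (Cmul (Cmul (F0 f eta 1) (Cpowz (F0 f eta 1) (Z.of_nat i2' - Z.of_nat i1)))
                   (Cmul (Pdn (F0 f eta) (Z.of_nat J) J) (Pdn (F0 f eta) (Z.of_nat i1) j2)))
             (Cmul (Cmul (Pup (FL f eta Lam) (Z.of_nat (S i2')) d) (Pdn (Fl f eta lam) (Z.of_nat i2') d))
                   (Cmul (Pdn (FlL f eta Lam lam) (Z.of_nat i2' + Z.of_nat j1') j1') (Fl f eta lam (Z.of_nat (S i2'))))))
        (Cmul (Cmul (Cmul (Pdn (F0 f eta) (Z.of_nat j1') j1') (Pdn (F0 f eta) (Z.of_nat d) d))
                    (Cmul (Pup (FL f eta Lam) 0 J) (Pdn (Fl f eta lam) (Z.of_nat j1') d)))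
              (Cmul (Cmul (Pdn (Fl f eta lam) (2 * Z.of_nat j1' - Z.of_nat J) j1') (F0 f eta (Z.of_nat (S j1'))))
                    (Cmul (Cmul (F0 f eta (Z.of_nat (S d))) (FL f eta Lam (Z.of_nat J)))
                          (Cmul (Fl f eta lam (Z.of_nat (S j1'))) (Cmul (Fl f eta lam (Z.of_nat (S j1') - Z.of_nat (S J))) (Fl f eta lam 0))))))).
  match type of T with ?L = _ => transitivity (Cmul X L) end.
  - rewrite T. unfold X. unify_atoms. field. repeat split; nz.
  - unfold X. unify_atoms. field. repeat split; nz.
Qed.
End Case.
End Main.

Lemma ones_le : forall l, (ones l <= length l)%nat.
Proof. induction l; simpl; auto. unfold ones in *. simpl. destruct (Bool.bool_dec a true); simpl; lia. Qed.

Lemma WJfused_big : forall f eta Lam J i1 j1 i2 K v lam, (J < j1)%nat ->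
  WJfused_K f eta Lam J i1 j1 i2 K v lam = Czero.
Proof.
  intros. unfold WJfused_K.
  rewrite (filter_ext_in _ (fun _ => false)). { rewrite filter_false. reflexivity. }
  intros l Hl. apply bool_lists_len in Hl. pose proof (ones_le l). apply Nat.eqb_neq. lia.
Qed.

Lemma W1_10' : forall f eta Lam J k k' lam, (0 <= k)%Z -> k' = (k + 1)%Z ->
  W1 f eta k true k' false (vJ eta Lam J) lam Lam =
  Cdiv (Cmul (FlL f eta Lam lam (k + 1 + Z.of_nat J)) (F0 f eta 1)) (Cmul (FL f eta Lam (Z.of_nat J)) (Fl f eta lam 0)).
Proof. intros; subst; apply W1_10; auto. Qed.
Lemma W1_01' : forall f eta Lam J k k' lam, (1 <= k)%Z -> k' = (k - 1)%Z ->
  W1 f eta k false k' true (vJ eta Lam J) lam Lam =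
  Cdiv (Cmul (Cmul (Fl f eta lam (k - 1 - Z.of_nat J)) (FL f eta Lam (k - 1))) (F0 f eta k))
       (Cmul (Cmul (FL f eta Lam (Z.of_nat J)) (Fl f eta lam 0)) (F0 f eta 1)).
Proof. intros; subst; apply W1_01; auto. Qed.

Section Main.
Variable f : Cplx -> Cplx.
Variables A B : Cplx -> Cplx.
Hypothesis Hprod : forall x y, Cmul (f (Cadd x y)) (f (Csub x y)) = Csub (Cmul (A x) (B y)) (Cmul (B x) (A y)).
Variables eta Lam : Cplx.

Lemma F0_zero : F0 f eta 0 = Czero.
Proof. unfold F0. rewrite <- (f_zero f A B Hprod). f_equal. Cring2. Qed.

Lemma Rc_zero : forall n i1 j1 i2 j2 lam, (i1 < j2)%nat -> Rc f eta Lam n i1 j1 i2 j2 lam = Czero.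
Proof.
  intros. unfold Rc. rewrite (Pdn_zero (F0 f eta) (Z.of_nat i1) j2 (Z.of_nat i1)).
  - ring.
  - lia.
  - rewrite Z.sub_diag. apply F0_zero.
Qed.

Lemma main_ind : forall N i1 j1 i2 K lam,
  length K = N -> (j1 <= N)%nat -> (i1 + j1 = i2 + ones K)%nat ->
  (forall c, (1 <= c <= Z.of_nat N)%Z -> F0 f eta c <> Czero) ->
  (forall c, (0 <= c < Z.of_nat N)%Z -> FL f eta Lam c <> Czero) ->
  (forall c, (- Z.of_nat N <= c <= Z.of_nat N)%Z -> Fl f eta lam c <> Czero) ->
  WJfused_K f eta Lam N i1 j1 i2 K (Copp (Cmul eta Lam)) lam = Rc f eta Lam N i1 j1 i2 (ones K) lam.
Proof.
  induction N as [|J IH]; intros i1 j1 i2 K lam HK Hj1 Hc HF0 HFL HFl.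
  - destruct K; [|simpl in HK; discriminate]. assert (j1 = 0%nat) by lia. subst j1.
    simpl in Hc. unfold ones in Hc. simpl in Hc. assert (i2 = i1) by lia. subst i2.
    unfold WJfused_K, WJcol, Rc, CB, istate. simpl.
    rewrite Z.add_0_r, Z.eqb_refl, Z.sub_diag.
    replace (0 <=? Z.of_nat i1)%Z with true by (symmetry; apply Z.leb_le; lia). simpl.
    unfold Pdn, Pup. simpl. unfold Cpowz. simpl. field; try exact Cone_neq.
  - destruct K as [|b0 K0] using rev_ind; [simpl in HK; discriminate|]. clear IHK0.
    rename K0 into K, b0 into b.
    rewrite length_app in HK. simpl in HK. assert (HKJ : length K = J) by lia.
    rewrite WJfused_snoc by auto.
    change (Cadd (Copp (Cmul eta Lam)) (two (Cmul eta (RtoC (INR J))))) with (vJ eta Lam J).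
    change (K ++ [b]) with (snoc b K) in *. rewrite ones_snoc in *.
    remember (ones K) as j2 eqn:Hj2.
    assert (HF0' : forall c, (1 <= c <= Z.of_nat J)%Z -> F0 f eta c <> Czero) by (intros; apply HF0; lia).
    assert (HFL' : forall c, (0 <= c < Z.of_nat J)%Z -> FL f eta Lam c <> Czero) by (intros; apply HFL; lia).
    assert (HFlf : forall c, (- Z.of_nat J <= c <= Z.of_nat J)%Z -> Fl f eta (lamf eta lam) c <> Czero).
    { intros. unfold lamf. rewrite Fl_shift. apply HFl. unfold sgn. lia. }
    assert (HFlt : forall c, (- Z.of_nat J <= c <= Z.of_nat J)%Z -> Fl f eta (lamt eta lam) c <> Czero).
    { intros. unfold lamt. rewrite Fl_shift. apply HFl. unfold sgn. lia. }
    change (Cadd lam (two (Cmul eta (ZtoC (sgn false))))) with (lamf eta lam).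
    change (Cadd lam (two (Cmul eta (ZtoC (sgn true))))) with (lamt eta lam).
    destruct b; simpl b2Z.
    +
      replace (Z.of_nat i2 + 1 - 0 <? 0)%Z with false by (symmetry; apply Z.ltb_ge; lia).
      replace (Z.of_nat i2 + 1 - 1 <? 0)%Z with false by (symmetry; apply Z.ltb_ge; lia).
      replace (Z.to_nat (Z.of_nat i2 + 1 - 0)) with (S i2) by lia.
      replace (Z.to_nat (Z.of_nat i2 + 1 - 1)) with i2 by lia.
      replace (Z.of_nat i2 + 1 - 0)%Z with (Z.of_nat (S i2)) by lia.
      replace (Z.of_nat i2 + 1 - 1)%Z with (Z.of_nat i2) by lia.
      rewrite (W1_01' f eta Lam J (Z.of_nat (S i2)) (Z.of_nat i2)) by lia.
      fold (W01f f eta Lam lam J (Z.of_nat (S i2))).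
      replace (j2 + 1)%nat with (S j2) by lia.
      destruct j1 as [|j1'].
      * rewrite IH, <- Hj2; auto; try lia.
        rewrite <- (case_b1_j0 f eta Lam (S J) lam HF0 HFL HFl J i1 i2 j2); auto; try lia. Cring.
      * rewrite W1_11 by lia. fold (W11f f eta Lam lam J (Z.of_nat i2)).
        destruct (Nat.eq_dec j1' J) as [->|Hne].
        -- rewrite WJfused_big by lia. rewrite IH, <- Hj2; auto; try lia.
           rewrite <- (case_b1_jN f eta Lam (S J) lam HF0 HFL HFl J i1 i2 j2); auto; try lia. Cring.
        -- rewrite !IH, <- Hj2; auto; try lia.
           apply (case_b1_int f A B Hprod eta Lam (S J) lam HF0 HFL HFl J j1' (J - S j1')); lia.
    +
      replace (Z.of_nat i2 + 0 - 0 <? 0)%Z with false by (symmetry; apply Z.ltb_ge; lia).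
      replace (Z.to_nat (Z.of_nat i2 + 0 - 0)) with i2 by lia.
      replace (Z.of_nat i2 + 0 - 0)%Z with (Z.of_nat i2) by lia.
      rewrite W1_00 by lia. fold (W00f f eta Lam lam J (Z.of_nat i2)).
      replace (j2 + 0)%nat with j2 by lia.
      destruct (Nat.lt_ge_cases i1 j2) as [Hz|Hz].
      *
        rewrite (Rc_zero (S J)) by auto.
        destruct (Nat.le_gt_cases j1 J).
        -- rewrite IH, <- Hj2; auto; try lia. rewrite Rc_zero by auto.
           destruct j1 as [|j1']; [Cring|].
           destruct (Z.ltb_spec (Z.of_nat i2 + 0 - 1) 0); [Cring|].
           rewrite IH, <- Hj2; auto; try lia. rewrite Rc_zero by auto. Cring.
        -- rewrite WJfused_big by lia.
           destruct j1 as [|j1']; [Cring|].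
           destruct (Z.ltb_spec (Z.of_nat i2 + 0 - 1) 0); [Cring|].
           rewrite IH, <- Hj2; auto; try lia. rewrite Rc_zero by auto. Cring.
      * destruct j1 as [|j1'].
        -- rewrite IH, <- Hj2; auto; try lia.
           rewrite <- (case_b0_j0 f eta Lam (S J) lam HF0 HFL HFl J i1 i2 j2); auto. Cring.
        -- destruct i2 as [|i2']; [lia|].
           replace (Z.of_nat (S i2') + 0 - 1 <? 0)%Z with false by (symmetry; apply Z.ltb_ge; lia).
           replace (Z.to_nat (Z.of_nat (S i2') + 0 - 1)) with i2' by lia.
           replace (Z.of_nat (S i2') + 0 - 1)%Z with (Z.of_nat i2') by lia.
           rewrite (W1_10' f eta Lam J (Z.of_nat i2') (Z.of_nat (S i2'))) by lia.
           fold (W10f f eta Lam lam J (Z.of_nat i2')).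
           destruct (Nat.eq_dec j1' J) as [->|Hne].
           ++ rewrite WJfused_big by lia. rewrite IH, <- Hj2; auto; try lia.
              rewrite <- (case_b0_jN f eta Lam (S J) lam HF0 HFL HFl J i1 i2' j2); auto. Cring.
           ++ rewrite !IH, <- Hj2; auto; try lia.
              apply (case_b0_int f A B Hprod eta Lam (S J) lam HF0 HFL HFl J j1' (J - S j1')); lia.
Qed.
End Main.

Lemma poch_nat : forall f eta a k,
  poch f eta a (Z.of_nat k) = Cprod (map (fun m => f (Csub a (Cmul (RtoC 2) (Cmul eta (RtoC (INR m)))))) (seq 0 k)).
Proof.
  intros. unfold poch. replace (0 <=? Z.of_nat k)%Z with true by (symmetry; apply Z.leb_le; lia).
  rewrite Nat2Z.id. reflexivity.
Qed.

Lemma map_seq_shift : forall (h : nat -> Cplx) b a, map h (seq a b) = map (fun m => h (a + m)%nat) (seq 0 b).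
Proof.
  intros h b; revert h; induction b; intros h a; simpl; auto. f_equal.
  - f_equal. lia.
  - rewrite IHb. rewrite (IHb _ 1%nat). apply map_ext. intros. f_equal. lia.
Qed.

Lemma Pup_app : forall g c a b, Pup g c (a + b) = Cmul (Pup g c a) (Pup g (c + Z.of_nat a)%Z b).
Proof.
  intros. unfold Pup. rewrite seq_app, map_app, Cprod_app. f_equal. f_equal.
  simpl. rewrite map_seq_shift. apply map_ext. intros. f_equal. lia.
Qed.

Section Final.
Variable f : Cplx -> Cplx.
Variables A B : Cplx -> Cplx.
Hypothesis Hprod : forall x y, Cmul (f (Cadd x y)) (f (Csub x y)) = Csub (Cmul (A x) (B y)) (Cmul (B x) (A y)).

Theorem theorem_abstract
  (eta lam Lam : Cplx)
  (J : nat) (HJ : (0 < J)%nat)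
  (i1 i2 j1 j2 : nat) (Hj1 : (j1 <= J)%nat) (Hj2 : (j2 <= J)%nat)
  (Hcons : (i1 + j1 = i2 + j2)%nat)
  (Hnz_eta : forall n : nat, (1 <= n <= J)%nat ->
       f (Cmul (RtoC 2) (Cmul eta (RtoC (INR n)))) <> Czero)
  (Hnz_Lam : forall n : nat, (n < Nat.max i2 J)%nat ->
       f (Csub (Cmul (RtoC 2) (Cmul eta Lam)) (Cmul (RtoC 2) (Cmul eta (RtoC (INR n))))) <> Czero)
  (Hnz_lam : forall m : Z, (- Z.of_nat J <= m <= Z.of_nat J)%Z ->
       f (Cadd lam (Cmul (RtoC 2) (Cmul eta (ZtoC m)))) <> Czero)
  (K : list bool) (HK : length K = J) (HKj2 : ones K = j2) :
  let P := poch f eta in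
  let t := fun x : Cplx => Cmul (RtoC 2) (Cmul eta x) in
  let n := fun k : nat => RtoC (INR k) in
  WJfused_K f eta Lam J i1 j1 i2 K (Copp (Cmul eta Lam)) lam =
  Cmul (Cpowz (f (t Cone)) (Z.of_nat i2 - Z.of_nat i1))
  (Cmul (Cdiv (Cmul (if Nat.leb j2 i1 then Cone else Czero) (P (t (n J)) (Z.of_nat J)))
              (Cmul (P (t (n j1)) (Z.of_nat j1)) (P (t (n (J - j1)%nat)) (Z.of_nat (J - j1)))))
  (Cmul (Cdiv (P (t Lam) (Z.of_nat i1)) (P (t Lam) (Z.of_nat i2)))
  (Cmul (Cdiv (Cmul (P (t (n i1)) (Z.of_nat j2))
                    (P (t (Csub Lam (n i1))) (Z.of_nat (J - j2))))
              (P (t Lam) (Z.of_nat J)))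
        (Cdiv (Cmul (P (Cadd lam (t (n i2))) (Z.of_nat (J - j1)))
                    (P (Cadd lam (t (Csub (Cadd (n i2) (n j1)) (Cadd Lam Cone)))) (Z.of_nat j1)))
              (Cmul (P (Cadd lam (t (n j1))) (Z.of_nat (J - j1)))
                    (P (Cadd lam (t (ZtoC (2 * Z.of_nat j1 - Z.of_nat J - 1)%Z))) (Z.of_nat j1))))))).
Proof.
  intros P t n.
  assert (HF0 : forall c, (1 <= c <= Z.of_nat J)%Z -> F0 f eta c <> Czero).
  { intros c Hc. replace c with (Z.of_nat (Z.to_nat c)) by lia.
    unfold F0. replace (Cmul (two eta) (ZtoC (Z.of_nat (Z.to_nat c))))
      with (Cmul (RtoC 2) (Cmul eta (RtoC (INR (Z.to_nat c))))) by Cring2. apply Hnz_eta. lia. }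
  assert (HFL : forall c, (0 <= c < Z.of_nat J)%Z -> FL f eta Lam c <> Czero).
  { intros c Hc. replace c with (Z.of_nat (Z.to_nat c)) by lia.
    unfold FL. replace (Csub (Cmul (two eta) Lam) (Cmul (two eta) (ZtoC (Z.of_nat (Z.to_nat c)))))
      with (Csub (Cmul (RtoC 2) (Cmul eta Lam)) (Cmul (RtoC 2) (Cmul eta (RtoC (INR (Z.to_nat c)))))) by Cring2.
    apply Hnz_Lam. lia. }
  assert (HFl : forall c, (- Z.of_nat J <= c <= Z.of_nat J)%Z -> Fl f eta lam c <> Czero).
  { intros c Hc. unfold Fl.
    replace (Cadd lam (Cmul (two eta) (ZtoC c))) with (Cadd lam (Cmul (RtoC 2) (Cmul eta (ZtoC c)))) by Cring2.
    apply Hnz_lam. lia. }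
  rewrite (main_ind f A B Hprod eta Lam J i1 j1 i2 K lam) by (auto; lia).
  rewrite HKj2.
  assert (E0 : forall c k, P (t (n c)) (Z.of_nat k) = Pdn (F0 f eta) (Z.of_nat c) k).
  { intros. unfold P, t, n. rewrite poch_nat. unfold Pdn. f_equal. apply map_ext. intros m.
    unfold F0. f_equal. Cring2. }
  assert (EL : forall k, P (t Lam) (Z.of_nat k) = Pup (FL f eta Lam) 0 k).
  { intros. unfold P, t, n. rewrite poch_nat. unfold Pup. f_equal. apply map_ext. intros m.
    unfold FL. f_equal. Cring2. }
  assert (ELc : forall c k, P (t (Csub Lam (n c))) (Z.of_nat k) = Pup (FL f eta Lam) (Z.of_nat c) k).
  { intros. unfold P, t, n. rewrite poch_nat. unfold Pup. f_equal. apply map_ext. intros m.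
    unfold FL. f_equal. Cring2. }
  assert (El : forall c k, P (Cadd lam (t (n c))) (Z.of_nat k) = Pdn (Fl f eta lam) (Z.of_nat c) k).
  { intros. unfold P, t, n. rewrite poch_nat. unfold Pdn. f_equal. apply map_ext. intros m.
    unfold Fl. f_equal. Cring2. }
  assert (ElL : forall c d k, P (Cadd lam (t (Csub (Cadd (n c) (n d)) (Cadd Lam Cone)))) (Z.of_nat k)
      = Pdn (FlL f eta Lam lam) (Z.of_nat c + Z.of_nat d - 1) k).
  { intros. unfold P, t, n. rewrite poch_nat. unfold Pdn. f_equal. apply map_ext. intros m.
    unfold FlL. f_equal. Cring2. }
  assert (Elz : forall z k, P (Cadd lam (t (ZtoC z))) (Z.of_nat k) = Pdn (Fl f eta lam) z k).
  { intros. unfold P, t, n. rewrite poch_nat. unfold Pdn. f_equal. apply map_ext. intros m.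
    unfold Fl. f_equal. Cring2. }
  assert (E1 : f (t Cone) = F0 f eta 1).
  { unfold t, F0. f_equal. Cring2. }
  rewrite !E0, !EL, !ELc, !El, !ElL, !Elz, E1.
  destruct (Nat.leb_spec j2 i1) as [Hle|Hgt].
  - assert (Esplit : Cmul (Pup (FL f eta Lam) 0 i1) (Pup (FL f eta Lam) (Z.of_nat i1) (J - j2))
                   = Cmul (Pup (FL f eta Lam) 0 i2) (Pup (FL f eta Lam) (Z.of_nat i2) (J - j1))).
    { rewrite <- !Pup_app. f_equal. lia. }
    assert (Hi2 : Pup (FL f eta Lam) 0 i2 <> Czero).
    { apply Pup_nz. intros m Hm. replace (0 + m)%Z with (Z.of_nat (Z.to_nat m)) by lia.
      unfold FL. replace (Csub (Cmul (two eta) Lam) (Cmul (two eta) (ZtoC (Z.of_nat (Z.to_nat m)))))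
      with (Csub (Cmul (RtoC 2) (Cmul eta Lam)) (Cmul (RtoC 2) (Cmul eta (RtoC (INR (Z.to_nat m)))))) by Cring2.
      apply Hnz_Lam. lia. }
    unfold Rc, CB.
    assert (Ed : Pup (FL f eta Lam) (Z.of_nat i2) (J - j1) =
                 Cdiv (Cmul (Pup (FL f eta Lam) 0 i1) (Pup (FL f eta Lam) (Z.of_nat i1) (J - j2))) (Pup (FL f eta Lam) 0 i2)).
    { rewrite Esplit. field. auto. }
    rewrite Ed. field. repeat split;
    first [ solve [auto]
          | apply Pdn_nz; intros; first [apply HF0; lia | apply HFl; lia]
          | apply Pup_nz; intros; apply HFL; lia ].
  - rewrite (Rc_zero f A B Hprod) by (auto; lia). unfold Cdiv. ring.
Qed.
End Final.

Lemma Cexp_add : forall a b, Cexp (Cadd a b) = Cmul (Cexp a) (Cexp b).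
Proof.
  intros [a1 a2] [b1 b2]. unfold Cexp. apply Ceq; simpl; rewrite exp_plus.
  - rewrite cos_plus. ring.
  - rewrite sin_plus. ring.
Qed.

Lemma Cexp_nz : forall a, Cexp a <> Czero.
Proof.
  intros [a1 a2] H. unfold Cexp in H. simpl in H. injection H as H1 H2.
  pose proof (exp_pos a1). pose proof (sin2_cos2 a2). unfold Rsqr in *.
  apply Rmult_integral in H1. apply Rmult_integral in H2.
  destruct H1; [lra|]. destruct H2; [lra|]. rewrite H1, H2 in H0. lra.
Qed.

Lemma Cexp_opp : forall a, Cexp (Copp a) = Cinv (Cexp a).
Proof.
  intros a. pose proof (Cexp_nz a).
  assert (E : Cmul (Cexp (Copp a)) (Cexp a) = Cone).
  { rewrite <- Cexp_add. replace (Cadd (Copp a) a) with Czero by Cring. unfold Cexp. apply Ceq; simpl;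
    rewrite ?exp_0, ?cos_0, ?sin_0; ring. }
  replace (Cexp (Copp a)) with (Cmul (Cmul (Cexp (Copp a)) (Cexp a)) (Cinv (Cexp a))) by (field; auto).
  rewrite E. field. auto.
Qed.

Definition Ez (z : Cplx) := Cexp (Cmul Ci (Cmul CPI z)).
Definition Asin (x : Cplx) := Cdiv (Copp (Cadd (Cmul (Ez x) (Ez x)) (Cinv (Cmul (Ez x) (Ez x))))) (RtoC 4).
Definition Bsin (x : Cplx) := Cone.

Lemma RtoC4_nz : RtoC 4 <> Czero.
Proof. intro H. injection H. lra. Qed.
Lemma c2i_nz : Cmul (RtoC 2) Ci <> Czero.
Proof. intro H. injection H. lra. Qed.

Lemma sin_prod : forall x y, Cmul (sinpi (Cadd x y)) (sinpi (Csub x y)) =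
  Csub (Cmul (Asin x) (Bsin y)) (Cmul (Bsin x) (Asin y)).
Proof.
  intros x y. unfold sinpi, Csin, Asin, Bsin.
  rewrite !Cexp_opp.
  change (Cexp (Cmul Ci (Cmul CPI (Cmul CPI (Cadd x y))))) with (Ez (Cmul CPI (Cadd x y))).
  replace (Cmul Ci (Cmul CPI (Cadd x y))) with (Cadd (Cmul Ci (Cmul CPI x)) (Cmul Ci (Cmul CPI y))) by Cring.
  replace (Cmul Ci (Cmul CPI (Csub x y))) with (Cadd (Cmul Ci (Cmul CPI x)) (Copp (Cmul Ci (Cmul CPI y)))) by Cring.
  rewrite !Cexp_add, !Cexp_opp. fold (Ez x). fold (Ez y).
  pose proof (Cexp_nz (Cmul Ci (Cmul CPI x))) as Hx. pose proof (Cexp_nz (Cmul Ci (Cmul CPI y))) as Hy.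
  fold (Ez x) in Hx. fold (Ez y) in Hy.
  assert (Hc : Cmul (Cmul (RtoC 2) Ci) (Cmul (RtoC 2) Ci) = Copp (RtoC 4)) by Cring.
  pose proof c2i_nz. pose proof RtoC4_nz.
  transitivity (Cdiv (Cmul (Csub (Cmul (Ez x) (Ez y)) (Cinv (Cmul (Ez x) (Ez y))))
                            (Csub (Cmul (Ez x) (Cinv (Ez y))) (Cinv (Cmul (Ez x) (Cinv (Ez y))))))
                     (Copp (RtoC 4))).
  - rewrite <- Hc. field. repeat split; auto; intro Hz; injection Hz; lra.
  - field. repeat split; auto; intro Hz; injection Hz; lra.
Qed.

Definition n1 (z : Cplx) := Rabs (re z) + Rabs (im z).

Lemma n1_nonneg : forall z, 0 <= n1 z.
Proof. intros; unfold n1; pose proof (Rabs_pos (re z)); pose proof (Rabs_pos (im z)); lra. Qed.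
Lemma n1_add : forall a b, n1 (Cadd a b) <= n1 a + n1 b.
Proof. intros; unfold n1; simpl. pose proof (Rabs_triang (re a) (re b)). pose proof (Rabs_triang (im a) (im b)). lra. Qed.
Lemma n1_opp : forall a, n1 (Copp a) = n1 a.
Proof. intros; unfold n1; simpl. rewrite !Rabs_Ropp. auto. Qed.
Lemma n1_sub : forall a b, n1 (Csub a b) <= n1 a + n1 b.
Proof. intros. unfold Csub. rewrite <- (n1_opp b). apply n1_add. Qed.
Lemma n1_mul : forall a b, n1 (Cmul a b) <= n1 a * n1 b.
Proof.
  intros [a1 a2] [b1 b2]; unfold n1; simpl.
  pose proof (Rabs_triang (a1*b1) (- (a2*b2))). pose proof (Rabs_triang (a1*b2) (a2*b1)).
  unfold Rminus. rewrite Rabs_Ropp in H. rewrite !Rabs_mult in *.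
  pose proof (Rabs_pos a1). pose proof (Rabs_pos a2). pose proof (Rabs_pos b1). pose proof (Rabs_pos b2). nra.
Qed.
Lemma re_le_n1 : forall z, Rabs (re z) <= n1 z.
Proof. intros; unfold n1; pose proof (Rabs_pos (im z)); lra. Qed.
Lemma im_le_n1 : forall z, Rabs (im z) <= n1 z.
Proof. intros; unfold n1; pose proof (Rabs_pos (re z)); lra. Qed.

Lemma Cseq_cv_n1 : forall u l, Un_cv (fun n => n1 (Csub (u n) l)) 0 -> Cseq_cv u l.
Proof.
  intros u l H. split; intros eps Heps; destruct (H eps Heps) as [N HN]; exists N; intros n Hn;
  specialize (HN n Hn); unfold Rdist in *; rewrite Rminus_0_r, Rabs_pos_eq in HN by apply n1_nonneg.
  - pose proof (re_le_n1 (Csub (u n) l)). simpl in H0. eapply Rle_lt_trans; [|exact HN]. exact H0.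
  - pose proof (im_le_n1 (Csub (u n) l)). simpl in H0. eapply Rle_lt_trans; [|exact HN]. exact H0.
Qed.

Lemma Cseq_cv_to_n1 : forall u l, Cseq_cv u l -> Un_cv (fun n => n1 (Csub (u n) l)) 0.
Proof.
  intros u l [H1 H2] eps Heps.
  destruct (H1 (eps/2)) as [N1 HN1]; [lra|]. destruct (H2 (eps/2)) as [N2 HN2]; [lra|].
  exists (max N1 N2). intros n Hn. specialize (HN1 n ltac:(lia)). specialize (HN2 n ltac:(lia)).
  unfold Rdist in *. rewrite Rminus_0_r, Rabs_pos_eq by apply n1_nonneg. unfold n1. simpl. unfold Rminus in *. lra.
Qed.

Lemma Cseq_cv_mul : forall u v a b, Cseq_cv u a -> Cseq_cv v b -> Cseq_cv (fun n => Cmul (u n) (v n)) (Cmul a b).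
Proof.
  intros u v a b [Hu1 Hu2] [Hv1 Hv2]. split; simpl.
  - apply CV_minus; apply CV_mult; auto.
  - apply CV_plus; apply CV_mult; auto.
Qed.
Lemma Cseq_cv_sub : forall u v a b, Cseq_cv u a -> Cseq_cv v b -> Cseq_cv (fun n => Csub (u n) (v n)) (Csub a b).
Proof.
  intros u v a b [Hu1 Hu2] [Hv1 Hv2]. split; simpl; apply CV_minus; auto.
Qed.
Lemma Cseq_cv_opp : forall u a, Cseq_cv u a -> Cseq_cv (fun n => Copp (u n)) (Copp a).
Proof.
  intros u a [H1 H2]. split; simpl.
  - apply (CV_opp (fun n => re (u n))); auto.
  - apply (CV_opp (fun n => im (u n))); auto.
Qed.
Lemma Cseq_cv_unique : forall u a b, Cseq_cv u a -> Cseq_cv u b -> a = b.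
Proof.
  intros u a b [H1 H2] [H3 H4]. apply Ceq; eapply UL_sequence; eauto.
Qed.
Lemma Cseq_cv_ext : forall u v a, (forall n, u n = v n) -> Cseq_cv u a -> Cseq_cv v a.
Proof.
  intros u v a E [H1 H2]. split; intros eps Heps.
  - destruct (H1 eps Heps) as [N HN]; exists N; intros; rewrite <- E; auto.
  - destruct (H2 eps Heps) as [N HN]; exists N; intros; rewrite <- E; auto.
Qed.

Lemma Cseq_cv_close : forall u v a, Cseq_cv u a -> Un_cv (fun n => n1 (Csub (v n) (u n))) 0 -> Cseq_cv v a.
Proof.
  intros u v a Hu Hd. apply Cseq_cv_n1. apply Cseq_cv_to_n1 in Hu.
  intros eps Heps. destruct (Hu (eps/2)) as [N1 HN1]; [lra|]. destruct (Hd (eps/2)) as [N2 HN2]; [lra|].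
  exists (max N1 N2). intros n Hn. specialize (HN1 n ltac:(lia)). specialize (HN2 n ltac:(lia)).
  unfold Rdist in *. rewrite Rminus_0_r, Rabs_pos_eq in * by apply n1_nonneg.
  replace (Csub (v n) a) with (Cadd (Csub (v n) (u n)) (Csub (u n) a)) by Cring.
  pose proof (n1_add (Csub (v n) (u n)) (Csub (u n) a)). lra.
Qed.

Definition Rsum (l : list R) : R := fold_right Rplus 0 l.

Lemma Rsum_app : forall l1 l2, Rsum (l1 ++ l2) = Rsum l1 + Rsum l2.
Proof. induction l1; simpl; intros; [lra|rewrite IHl1; lra]. Qed.
Lemma Rsum_perm : forall l1 l2, Permutation l1 l2 -> Rsum l1 = Rsum l2.
Proof. intros l1 l2 H; induction H; simpl; auto; lra. Qed.

Lemma sum_nodup_eq : forall (A : Type) (g : A -> Cplx) L1 L2, NoDup L1 -> NoDup L2 ->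
  (forall x, In x L1 <-> In x L2) -> Csum (map g L1) = Csum (map g L2).
Proof. intros. apply Csum_perm, Permutation_map, NoDup_Permutation; auto. Qed.
Lemma Rsum_nodup_eq : forall (A : Type) (g : A -> R) L1 L2, NoDup L1 -> NoDup L2 ->
  (forall x, In x L1 <-> In x L2) -> Rsum (map g L1) = Rsum (map g L2).
Proof. intros. apply Rsum_perm, Permutation_map, NoDup_Permutation; auto. Qed.

Lemma Csum_filter : forall (A : Type) (g : A -> Cplx) P L,
  Csum (map g (filter P L)) = Csum (map (fun x => if P x then g x else Czero) L).
Proof. induction L; simpl; auto. destruct (P a); simpl; rewrite IHL; auto. Cring. Qed.
Lemma Rsum_filter : forall (A : Type) (g : A -> R) P L,
  Rsum (map g (filter P L)) = Rsum (map (fun x => if P x then g x else 0) L).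
Proof. induction L; simpl; auto. destruct (P a); simpl; rewrite IHL; auto. lra. Qed.

Lemma n1_Csum : forall (A : Type) (g : A -> Cplx) L, n1 (Csum (map g L)) <= Rsum (map (fun x => n1 (g x)) L).
Proof.
  induction L; simpl.
  - unfold n1; simpl; rewrite Rabs_R0; lra.
  - pose proof (n1_add (g a) (Csum (map g L))). lra.
Qed.
Lemma Rsum_le : forall (A : Type) (g h : A -> R) L, (forall x, In x L -> g x <= h x) ->
  Rsum (map g L) <= Rsum (map h L).
Proof.
  induction L; simpl; intros; [lra|]. pose proof (H a (or_introl eq_refl)).
  assert (Rsum (map g L) <= Rsum (map h L)) by (apply IHL; auto). lra.
Qed.
Lemma Csum_sub : forall (A : Type) (g h : A -> Cplx) L,
  Csub (Csum (map g L)) (Csum (map h L)) = Csum (map (fun x => Csub (g x) (h x)) L).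
Proof. induction L; simpl. - Cring. - rewrite <- IHL. Cring. Qed.
Lemma Csum_add_map : forall (A : Type) (g h : A -> Cplx) L,
  Cadd (Csum (map g L)) (Csum (map h L)) = Csum (map (fun x => Cadd (g x) (h x)) L).
Proof. induction L; simpl. - Cring. - rewrite <- IHL. Cring. Qed.
Lemma Csum_ext : forall (A : Type) (g h : A -> Cplx) L, (forall x, In x L -> g x = h x) ->
  Csum (map g L) = Csum (map h L).
Proof. intros. f_equal. apply map_ext_in. auto. Qed.
Lemma Rsum_ext : forall (A : Type) (g h : A -> R) L, (forall x, In x L -> g x = h x) ->
  Rsum (map g L) = Rsum (map h L).
Proof. intros. f_equal. apply map_ext_in. auto. Qed.
Lemma Rsum_nonneg : forall (A : Type) (g : A -> R) L, (forall x, In x L -> 0 <= g x) -> 0 <= Rsum (map g L).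
Proof. induction L; simpl; intros; [lra|]. pose proof (H a (or_introl eq_refl)).
  assert (0 <= Rsum (map g L)) by (apply IHL; auto). lra. Qed.

Lemma Csum_prod : forall (A B : Type) (g : A -> Cplx) (h : B -> Cplx) L1 L2,
  Cmul (Csum (map g L1)) (Csum (map h L2)) = Csum (map (fun p => Cmul (g (fst p)) (h (snd p))) (list_prod L1 L2)).
Proof.
  induction L1; intros; simpl. - Cring.
  - rewrite map_app, Csum_app, <- IHL1, map_map. simpl.
    assert (E : Csum (map (fun x => Cmul (g a) (h x)) L2) = Cmul (g a) (Csum (map h L2))).
    { induction L2; simpl. - Cring. - rewrite IHL2. Cring. }
    rewrite E. Cring.
Qed.
Lemma Rsum_prod : forall (A B : Type) (g : A -> R) (h : B -> R) L1 L2,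
  Rsum (map g L1) * Rsum (map h L2) = Rsum (map (fun p => g (fst p) * h (snd p)) (list_prod L1 L2)).
Proof.
  induction L1; intros; simpl. - lra.
  - rewrite map_app, Rsum_app, <- IHL1, map_map. simpl.
    assert (E : Rsum (map (fun x => g a * h x) L2) = g a * Rsum (map h L2)).
    { induction L2; simpl. - lra. - rewrite IHL2. lra. }
    rewrite E. lra.
Qed.

Definition zr (K : nat) : list Z := map (fun k => (Z.of_nat k - Z.of_nat K)%Z) (seq 0 (2 * K + 1)).

Lemma in_zr : forall K m, In m (zr K) <-> (- Z.of_nat K <= m <= Z.of_nat K)%Z.
Proof.
  intros. unfold zr. rewrite in_map_iff. split.
  - intros [k [<- Hk]]. apply in_seq in Hk. lia.
  - intros H. exists (Z.to_nat (m + Z.of_nat K)). split; [lia|]. apply in_seq. lia.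
Qed.
Lemma NoDup_zr : forall K, NoDup (zr K).
Proof.
  intros. unfold zr. apply NoDup_map_NoDup_ForallPairs; [|apply seq_NoDup].
  intros x y _ _ E. lia.
Qed.

Lemma NoDup_prod : forall (A B : Type) (L1 : list A) (L2 : list B), NoDup L1 -> NoDup L2 -> NoDup (list_prod L1 L2).
Proof.
  induction L1; intros L2 H1 H2; simpl. - constructor.
  - inversion H1; subst. apply NoDup_app.
    + apply NoDup_map_NoDup_ForallPairs; auto. intros x y _ _ E. injection E; auto.
    + apply IHL1; auto.
    + intros [u v] Hu Hv. apply in_map_iff in Hu. destruct Hu as [w [Ew _]]. injection Ew as -> _.
      apply in_prod_iff in Hv. destruct Hv. contradiction.
Qed.

Lemma Zsym_zr : forall a N, Zsym_partial a N = Csum (map a (zr N)).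
Proof. intros. unfold Zsym_partial, zr. rewrite map_map. reflexivity. Qed.

Definition inbox (M : nat) (p : Z * Z) : bool :=
  ((Z.abs (fst p) <=? Z.of_nat M) && (Z.abs (snd p) <=? Z.of_nat M))%Z.
Definition box (K : nat) := list_prod (zr K) (zr K).

Lemma in_box : forall K p, In p (box K) <-> inbox K p = true.
Proof.
  intros K [m n]. unfold box, inbox. rewrite in_prod_iff, !in_zr. simpl.
  rewrite andb_true_iff, !Z.leb_le. lia.
Qed.

Section Geo.
Variable rho : R.
Hypothesis Hrho : 0 < rho < 1.
Definition g1 (m : Z) := rho ^ (Z.abs_nat m).
Definition SK (K : nat) := Rsum (map g1 (zr K)).
Definition Sinf := 1 + 2 * rho / (1 - rho).

Lemma g1_pos : forall m, 0 < g1 m.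
Proof. intros. unfold g1. apply pow_lt. lra. Qed.

Lemma SK_S : forall K, SK (S K) = SK K + 2 * rho ^ (S K).
Proof.
  intros K. unfold SK.
  rewrite (Rsum_nodup_eq _ g1 (zr (S K)) ((- Z.of_nat (S K))%Z :: Z.of_nat (S K) :: zr K)).
  - change (Rsum (map g1 ((- Z.of_nat (S K))%Z :: Z.of_nat (S K) :: zr K))) with
      (g1 (- Z.of_nat (S K))%Z + (g1 (Z.of_nat (S K)) + Rsum (map g1 (zr K)))).
    unfold g1 at 1 2. replace (Z.abs_nat (- Z.of_nat (S K))) with (S K) by lia.
    replace (Z.abs_nat (Z.of_nat (S K))) with (S K) by lia. lra.
  - apply NoDup_zr.
  - constructor; [|constructor; [|apply NoDup_zr]].
    + intros [H|H]; [lia|]. apply in_zr in H. lia.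
    + intros H. apply in_zr in H. lia.
  - intros x. rewrite in_zr. simpl. rewrite in_zr. lia.
Qed.

Lemma SK_formula : forall K, SK K = Sinf - 2 * rho ^ (S K) / (1 - rho).
Proof.
  induction K.
  - unfold SK, zr, Sinf. simpl. unfold g1. simpl. field. lra.
  - rewrite SK_S, IHK. unfold Sinf. simpl. field. lra.
Qed.

Lemma SK_le : forall K, 0 <= SK K <= Sinf.
Proof.
  intros. split.
  - unfold SK. apply Rsum_nonneg. intros. pose proof (g1_pos x). lra.
  - rewrite SK_formula. assert (0 < rho ^ S K) by (apply pow_lt; lra).
    assert (0 < 2 * rho ^ S K / (1 - rho)) by (apply Rdiv_lt_0_compat; lra). lra.
Qed.

Lemma SK_mono : forall M K, (M <= K)%nat -> SK M <= SK K.
Proof.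
  intros. induction H; [lra|]. rewrite SK_S. assert (0 < rho ^ S m) by (apply pow_lt; lra). lra.
Qed.

Lemma SK_cv : Un_cv SK Sinf.
Proof.
  intros eps Heps.
  destruct (pow_lt_1_zero rho ltac:(rewrite Rabs_pos_eq; lra) (eps * (1 - rho) / 2)) as [N HN].
  { apply Rmult_lt_0_compat; [apply Rmult_lt_0_compat|]; lra. }
  exists N. intros n Hn. unfold Rdist. rewrite SK_formula.
  specialize (HN (S n) ltac:(lia)). rewrite Rabs_pos_eq in HN by (apply pow_le; lra).
  assert (0 < rho ^ S n) by (apply pow_lt; lra).
  replace (Sinf - 2 * rho ^ S n / (1 - rho) - Sinf) with (- (2 * rho ^ S n / (1 - rho))) by ring.
  rewrite Rabs_Ropp, Rabs_pos_eq.
  - apply (Rmult_lt_reg_r (1 - rho)); [lra|]. field_simplify; [|lra]. lra.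
  - unfold Rdiv; apply Rmult_le_pos; [lra|]; left; apply Rinv_0_lt_compat; lra.
Qed.

Lemma Rsum_box_prod : forall K (g h : Z -> R),
  Rsum (map (fun p => g (fst p) * h (snd p)) (box K)) = Rsum (map g (zr K)) * Rsum (map h (zr K)).
Proof. intros. unfold box. rewrite Rsum_prod. reflexivity. Qed.

Definition Zpair_dec : forall p q : Z * Z, {p = q} + {p <> q}.
Proof. decide equality; apply Z.eq_dec. Defined.
Definition inL (L : list (Z * Z)) (p : Z * Z) : bool :=
  if in_dec Zpair_dec p L then true else false.

Lemma sum_as_box : forall (w : Z * Z -> Cplx) L K, NoDup L -> (forall p, In p L -> In p (box K)) ->
  Csum (map w L) = Csum (map (fun p => if inL L p then w p else Czero) (box K)).
Proof.
  intros. rewrite <- Csum_filter. apply sum_nodup_eq; auto.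
  - apply NoDup_filter. unfold box. apply NoDup_prod; apply NoDup_zr.
  - intros x. rewrite filter_In. unfold inL. destruct (in_dec Zpair_dec x L); split; intros HH.
    + auto.
    + auto.
    + contradiction.
    + destruct HH; discriminate.
Qed.

Lemma box_compare : forall (w : Z * Z -> Cplx) Cw L1 L2 M K, (M <= K)%nat ->
  NoDup L1 -> NoDup L2 ->
  (forall p, In p L1 -> In p (box K)) -> (forall p, In p L2 -> In p (box K)) ->
  (forall p, In p (box M) -> In p L1) -> (forall p, In p (box M) -> In p L2) ->
  (forall m n, n1 (w (m, n)) <= Cw * (g1 m * g1 n)) ->
  n1 (Csub (Csum (map w L1)) (Csum (map w L2))) <= Cw * (SK K * SK K - SK M * SK M).
Proof.
  intros w Cw L1 L2 M K HMK N1 N2 S1 S2 B1 B2 Hw.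
  rewrite (sum_as_box w L1 K), (sum_as_box w L2 K), Csum_sub by auto.
  eapply Rle_trans; [apply n1_Csum|].
  eapply Rle_trans.
  { apply (Rsum_le _ _ (fun p => if inbox M p then 0 else Cw * (g1 (fst p) * g1 (snd p)))).
    intros [m n] Hp. destruct (inbox M (m, n)) eqn:E.
    - assert (In (m,n) (box M)) by (apply in_box; auto).
      unfold inL. destruct (in_dec Zpair_dec (m,n) L1); [|exfalso; auto].
      destruct (in_dec Zpair_dec (m,n) L2); [|exfalso; auto].
      replace (Csub (w (m, n)) (w (m, n))) with Czero by Cring. unfold n1; simpl. rewrite Rabs_R0. lra.
    - specialize (Hw m n). simpl.
      unfold inL; destruct (in_dec Zpair_dec (m,n) L1); destruct (in_dec Zpair_dec (m,n) L2).
      + replace (Csub (w (m, n)) (w (m, n))) with Czero by Cring. unfold n1; simpl. rewrite Rabs_R0.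
        pose proof (g1_pos m). pose proof (g1_pos n). pose proof (n1_nonneg (w (m,n))). nra.
      + replace (Csub (w (m, n)) Czero) with (w (m,n)) by Cring. auto.
      + replace (Csub Czero (w (m, n))) with (Copp (w (m,n))) by Cring. rewrite n1_opp. auto.
      + replace (Csub Czero Czero) with Czero by Cring. unfold n1; simpl. rewrite Rabs_R0.
        pose proof (g1_pos m). pose proof (g1_pos n). pose proof (n1_nonneg (w (m,n))). nra. }
  right.
  assert (E1 : Rsum (map (fun p => if inbox M p then 0 else Cw * (g1 (fst p) * g1 (snd p))) (box K)) =
     Cw * (Rsum (map (fun p => g1 (fst p) * g1 (snd p)) (box K)) -
           Rsum (map (fun p => if inbox M p then g1 (fst p) * g1 (snd p) else 0) (box K)))).
  { generalize (box K). induction l; simpl; [ring|]. rewrite IHl. destruct (inbox M a); ring. }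
  rewrite E1, <- Rsum_filter.
  rewrite (Rsum_nodup_eq _ _ (filter (inbox M) (box K)) (box M)).
  - rewrite !Rsum_box_prod. unfold SK. ring.
  - apply NoDup_filter. unfold box. apply NoDup_prod; apply NoDup_zr.
  - unfold box. apply NoDup_prod; apply NoDup_zr.
  - intros x. rewrite filter_In, !in_box. split; [intros []; auto|]. intros H; split; auto.
    destruct x as [m n]. unfold inbox in *. simpl in *. rewrite andb_true_iff, !Z.leb_le in *. lia.
Qed.
End Geo.

Definition rho0 := exp (-1).
Lemma rho0_bounds : 0 < rho0 < 1.
Proof. unfold rho0. split. - apply exp_pos. - rewrite <- exp_0. apply exp_increasing. lra. Qed.

Lemma rho0_pow : forall n, rho0 ^ n = exp (- INR n).
Proof.
  induction n. - simpl. rewrite Ropp_0, exp_0. auto.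
  - rewrite S_INR. simpl. rewrite IHn. unfold rho0. rewrite <- exp_plus. f_equal. ring.
Qed.

Lemma g1_exp : forall m, g1 rho0 m = exp (- Rabs (IZR m)).
Proof.
  intros. unfold g1. rewrite rho0_pow. f_equal. f_equal.
  rewrite <- abs_IZR, INR_IZR_INZ. f_equal. lia.
Qed.

Lemma gauss_bound : forall a B x, 0 < a -> - a * x * x + B * x + Rabs x <= (Rabs B + 1) * (Rabs B + 1) / (4 * a).
Proof.
  intros a B x Ha.
  assert (B * x <= Rabs B * Rabs x).
  { rewrite <- Rabs_mult. apply Rle_abs. }
  assert (Rabs x * Rabs x = x * x) by (rewrite <- Rabs_mult; apply Rabs_pos_eq; nra).
  set (q := (Rabs B + 1) / (2 * a)).
  assert (Hq : Rabs B + 1 = 2 * a * q) by (unfold q; field; lra).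
  assert (Hr : (Rabs B + 1) * (Rabs B + 1) / (4 * a) = a * q * q) by (rewrite Hq; field; lra).
  rewrite Hr. pose proof (Rabs_pos x). pose proof (Rabs_pos B).
  assert (0 <= a * ((Rabs x - q) * (Rabs x - q))) by (apply Rmult_le_pos; [lra | apply Rle_0_sqr]).
  nra.
Qed.

Lemma n1_Cexp : forall w, n1 (Cexp w) <= 2 * exp (re w).
Proof.
  intros [a b]. unfold n1, Cexp. simpl. rewrite !Rabs_mult, (Rabs_pos_eq (exp a)) by (left; apply exp_pos).
  pose proof (exp_pos a). pose proof (COS_bound b). pose proof (SIN_bound b).
  assert (Rabs (cos b) <= 1) by (apply Rabs_le; lra). assert (Rabs (sin b) <= 1) by (apply Rabs_le; lra).
  nra.
Qed.

Lemma exp_le_g1 : forall (c r : R) (j : Z), r <= c - Rabs (IZR j) -> exp r <= exp c * g1 rho0 j.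
Proof.
  intros. rewrite g1_exp, <- exp_plus. destruct (Req_dec r (c + - Rabs (IZR j))).
  - rewrite H0. lra.
  - left. apply exp_increasing. lra.
Qed.

Definition uterm (tau x : Cplx) (p : Z) : Cplx :=
  Cexp (Cadd (Cmul (Cmul (Cmul CPI Ci) tau) (RtoC (IZR p * IZR p / 2)))
             (Cmul (Cmul (RtoC 2) (Cmul CPI Ci)) (Cmul (ZtoC p) x))).

Lemma re_theta : forall tau z j,
  re (Cadd (Cmul (Cmul (Cmul CPI Ci) tau) (Cmul (Cadd (ZtoC j) (RtoC (1/2))) (Cadd (ZtoC j) (RtoC (1/2)))))
           (Cmul (Cmul (Cmul (RtoC 2) (Cmul CPI Ci)) (Cadd (ZtoC j) (RtoC (1/2)))) (Cadd z (RtoC (1/2))))) =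
  - (PI * im tau) * (IZR j + 1/2) * (IZR j + 1/2) + (- 2 * PI * im z) * (IZR j + 1/2).
Proof. intros. unfold CPI, Ci, ZtoC, RtoC. simpl. ring. Qed.

Lemma theta_bound : forall tau z, 0 < im tau -> exists C, 0 <= C /\ forall j, n1 (theta_term tau z j) <= C * g1 rho0 j.
Proof.
  intros tau z Ht.
  set (a := PI * im tau). set (B := - 2 * PI * im z).
  assert (Ha : 0 < a) by (unfold a; pose proof PI_RGT_0; nra).
  set (c := (Rabs B + 1) * (Rabs B + 1) / (4 * a)).
  exists (2 * exp (c + 1/2)). split. { pose proof (exp_pos (c + 1/2)). lra. }
  intros j. unfold theta_term. cbv zeta.
  eapply Rle_trans; [apply n1_Cexp|]. rewrite re_theta. fold a B.
  replace (2 * exp (c + 1/2) * g1 rho0 j) with (2 * (exp (c + 1/2) * g1 rho0 j)) by ring.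
  apply Rmult_le_compat_l; [lra|].
  apply exp_le_g1.
  pose proof (gauss_bound a B (IZR j + 1/2) Ha). fold c in H.
  assert (Rabs (IZR j) <= Rabs (IZR j + 1/2) + 1/2).
  { unfold Rabs. destruct (Rcase_abs (IZR j)); destruct (Rcase_abs (IZR j + 1/2)); lra. }
  nra.
Qed.

Lemma re_u : forall tau x p,
  re (Cadd (Cmul (Cmul (Cmul CPI Ci) tau) (RtoC (IZR p * IZR p / 2)))
           (Cmul (Cmul (RtoC 2) (Cmul CPI Ci)) (Cmul (ZtoC p) x))) =
  - (PI * im tau / 2) * IZR p * IZR p + (- 2 * PI * im x) * IZR p.
Proof. intros. unfold CPI, Ci, ZtoC, RtoC. simpl. field. Qed.

Lemma u_bound : forall tau x, 0 < im tau -> exists C, 0 <= C /\ forall p, n1 (uterm tau x p) <= C * exp (- Rabs (IZR p)).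
Proof.
  intros tau x Ht.
  set (a := PI * im tau / 2). set (B := - 2 * PI * im x).
  assert (Ha : 0 < a) by (unfold a; pose proof PI_RGT_0; nra).
  set (c := (Rabs B + 1) * (Rabs B + 1) / (4 * a)).
  exists (2 * exp c). split. { pose proof (exp_pos c). lra. }
  intros p. unfold uterm.
  eapply Rle_trans; [apply n1_Cexp|]. rewrite re_u. fold a B.
  replace (2 * exp c * exp (- Rabs (IZR p))) with (2 * (exp c * exp (- Rabs (IZR p)))) by ring.
  apply Rmult_le_compat_l; [lra|].
  rewrite <- exp_plus. destruct (Req_dec (- a * IZR p * IZR p + B * IZR p) (c + - Rabs (IZR p))) as [E|E].
  - rewrite E. lra.
  - left. apply exp_increasing. pose proof (gauss_bound a B (IZR p) Ha). fold c in H. lra.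
Qed.

Lemma zr_restrict : forall M K, (M <= K)%nat -> forall (a : Z -> Cplx),
  Csum (map a (zr M)) = Csum (map (fun j => if (Z.abs j <=? Z.of_nat M)%Z then a j else Czero) (zr K)).
Proof.
  intros. rewrite <- Csum_filter. apply sum_nodup_eq; [apply NoDup_zr| apply NoDup_filter, NoDup_zr|].
  intros x. rewrite filter_In, !in_zr, Z.leb_le. lia.
Qed.
Lemma zr_restrictR : forall M K, (M <= K)%nat -> forall (a : Z -> R),
  Rsum (map a (zr M)) = Rsum (map (fun j => if (Z.abs j <=? Z.of_nat M)%Z then a j else 0) (zr K)).
Proof.
  intros. rewrite <- Rsum_filter. apply Rsum_nodup_eq; [apply NoDup_zr| apply NoDup_filter, NoDup_zr|].
  intros x. rewrite filter_In, !in_zr, Z.leb_le. lia.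
Qed.

Lemma partial_diff : forall (a : Z -> Cplx) C, 0 <= C -> (forall j, n1 (a j) <= C * g1 rho0 j) ->
  forall M K, (M <= K)%nat ->
  n1 (Csub (Csum (map a (zr K))) (Csum (map a (zr M)))) <= C * (SK rho0 K - SK rho0 M).
Proof.
  intros a C HC Ha M K HMK.
  rewrite (zr_restrict M K HMK), Csum_sub.
  eapply Rle_trans; [apply n1_Csum|].
  unfold SK. rewrite (zr_restrictR M K HMK).
  assert (E : C * (Rsum (map (g1 rho0) (zr K)) - Rsum (map (fun j => if (Z.abs j <=? Z.of_nat M)%Z then g1 rho0 j else 0) (zr K)))
     = Rsum (map (fun j => if (Z.abs j <=? Z.of_nat M)%Z then 0 else C * g1 rho0 j) (zr K))).
  { generalize (zr K). induction l; simpl; [ring|]. rewrite <- IHl. destruct (Z.abs a0 <=? Z.of_nat M)%Z; ring. }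
  rewrite E. apply Rsum_le. intros j _. destruct (Z.abs j <=? Z.of_nat M)%Z.
  - replace (Csub (a j) (a j)) with Czero by Cring. unfold n1; simpl; rewrite Rabs_R0; lra.
  - replace (Csub (a j) Czero) with (a j) by Cring. auto.
Qed.

Lemma lim_exists : forall (a : Z -> Cplx), (exists C, 0 <= C /\ forall j, n1 (a j) <= C * g1 rho0 j) ->
  { l : Cplx | Cseq_cv (fun N => Csum (map a (zr N))) l }.
Proof.
  intros a HC.
  assert (Hcau : forall (pr : Cplx -> R), (forall z, Rabs (pr z) <= n1 z) -> (forall u v, pr (Csub u v) = pr u - pr v) ->
            Cauchy_crit (fun N => pr (Csum (map a (zr N))))).
  { intros pr Hpr Hsub eps Heps. destruct HC as [C [HC0 HCa]].
    pose proof (CV_Cauchy (SK rho0) (exist _ _ (SK_cv rho0 rho0_bounds))) as Hc.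
    destruct (Hc (eps / (C + 1))) as [N HN]. { apply Rdiv_lt_0_compat; lra. }
    exists N. intros n m Hn Hm. unfold Rdist. rewrite <- Hsub.
    eapply Rle_lt_trans; [apply Hpr|].
    specialize (HN n m Hn Hm). unfold Rdist in HN.
    assert (Hq : C * Rabs (SK rho0 n - SK rho0 m) < eps).
    { apply (Rmult_lt_compat_l (C + 1)) in HN; [|lra]. unfold Rdiv in HN.
      rewrite <- Rmult_assoc, (Rmult_comm (C+1) eps), Rmult_assoc, Rinv_r, Rmult_1_r in HN by lra.
      pose proof (Rabs_pos (SK rho0 n - SK rho0 m)). nra. }
    destruct (Nat.le_ge_cases m n).
    - pose proof (partial_diff a C HC0 HCa m n H). pose proof (SK_mono rho0 rho0_bounds m n H).
      rewrite Rabs_pos_eq in Hq by lra. lra.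
    - pose proof (partial_diff a C HC0 HCa n m H). pose proof (SK_mono rho0 rho0_bounds n m H).
      replace (Csub (Csum (map a (zr n))) (Csum (map a (zr m)))) with
              (Copp (Csub (Csum (map a (zr m))) (Csum (map a (zr n))))) by Cring.
      rewrite n1_opp. rewrite Rabs_minus_sym, Rabs_pos_eq in Hq by lra. lra. }
  destruct (R_complete _ (Hcau re (fun z => re_le_n1 z) (fun u v => eq_refl))) as [lr Hr].
  destruct (R_complete _ (Hcau im (fun z => im_le_n1 z) (fun u v => eq_refl))) as [li Hi].
  exists (mkC lr li). split; auto.
Qed.

Ltac Cfield2 := apply Ceq; unfold two, CPI, Ci, Csub, Cdiv, ZtoC, RtoC in *; cbn [re im Cadd Cmul Copp Cinv Czero Cone];
  repeat first [rewrite minus_IZR | rewrite plus_IZR | rewrite opp_IZR | rewrite mult_IZR]; field.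

Lemma Cexp_2pik : forall k : Z, Cexp (mkC 0 (2 * PI * IZR k)) = Cone.
Proof.
  intros k. unfold Cexp. simpl. rewrite exp_0.
  assert (H : forall n : nat, cos (2 * PI * INR n) = 1 /\ sin (2 * PI * INR n) = 0).
  { intros n. replace (2 * PI * INR n) with (0 + 2 * INR n * PI) by ring.
    rewrite cos_period, sin_period, cos_0, sin_0. auto. }
  destruct (Z_le_gt_dec 0 k).
  - replace k with (Z.of_nat (Z.to_nat k)) by lia. rewrite <- INR_IZR_INZ.
    destruct (H (Z.to_nat k)) as [H1 H2]. rewrite H1, H2. apply Ceq; simpl; ring.
  - replace k with (- Z.of_nat (Z.to_nat (- k)))%Z by lia. rewrite opp_IZR, <- INR_IZR_INZ.
    destruct (H (Z.to_nat (- k))) as [H1 H2].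
    replace (2 * PI * - INR (Z.to_nat (- k))) with (- (2 * PI * INR (Z.to_nat (- k)))) by ring.
    rewrite cos_neg, sin_neg, H1, H2. apply Ceq; simpl; ring.
Qed.

Lemma Cexp_PI : Cexp (mkC 0 PI) = Copp Cone.
Proof. unfold Cexp. simpl. rewrite exp_0, cos_PI, sin_PI. apply Ceq; simpl; ring. Qed.

Lemma term_id1 : forall tau x y j l,
  Cmul (theta_term tau (Cadd x y) (j + l)) (theta_term tau (Csub x y) (j - l - 1)) =
  Cmul (uterm tau x (2 * j)) (uterm tau y (2 * l + 1)).
Proof.
  intros. unfold theta_term, uterm. cbv zeta. rewrite <- !Cexp_add.
  match goal with |- Cexp ?L = Cexp ?R => assert (EQ : L = Cadd R (mkC 0 (2 * PI * IZR j))) end.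
  { apply Ceq; unfold two, CPI, Ci, Csub, Cdiv, ZtoC, RtoC in *; cbn [re im Cadd Cmul Copp Cinv Czero Cone];
    repeat first [rewrite minus_IZR | rewrite plus_IZR | rewrite opp_IZR | rewrite mult_IZR].
    all: field. }
  rewrite EQ, Cexp_add, Cexp_2pik. Cring.
Qed.

Lemma term_id0 : forall tau x y j l,
  Cmul (theta_term tau (Cadd x y) (j + l)) (theta_term tau (Csub x y) (j - l)) =
  Copp (Cmul (uterm tau x (2 * j + 1)) (uterm tau y (2 * l))).
Proof.
  intros. unfold theta_term, uterm. cbv zeta. rewrite <- !Cexp_add.
  match goal with |- Cexp ?L = Copp (Cexp ?R) => replace L with (Cadd (Cadd R (mkC 0 (2 * PI * IZR j))) (mkC 0 PI)) by Cfield2 end.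
  rewrite !Cexp_add, Cexp_2pik, Cexp_PI. Cring.
Qed.

Lemma exp_abs_le : forall p j : Z, (Z.abs j <= Z.abs p)%Z -> exp (- Rabs (IZR p)) <= g1 rho0 j.
Proof.
  intros. rewrite g1_exp. destruct (Z.eq_dec (Z.abs j) (Z.abs p)) as [E|E].
  - rewrite !Rabs_Zabs, E. lra.
  - left. apply exp_increasing. rewrite !Rabs_Zabs. apply Ropp_lt_contravar. apply IZR_lt. lia.
Qed.

Section Theta.
Variable tau : Cplx.
Hypothesis Ht : 0 < im tau.

Lemma Ebound : forall x, exists C, 0 <= C /\ forall j, n1 (uterm tau x (2 * j)) <= C * g1 rho0 j.
Proof.
  intros x. destruct (u_bound tau x Ht) as [C [HC H]]. exists C. split; auto. intros j.
  eapply Rle_trans; [apply H|]. apply Rmult_le_compat_l; auto. apply exp_abs_le. lia.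
Qed.
Lemma Obound : forall x, exists C, 0 <= C /\ forall j, n1 (uterm tau x (2 * j + 1)) <= C * g1 rho0 j.
Proof.
  intros x. destruct (u_bound tau x Ht) as [C [HC H]]. exists C. split; auto. intros j.
  eapply Rle_trans; [apply H|]. apply Rmult_le_compat_l; auto. apply exp_abs_le. lia.
Qed.

Definition Eth (x : Cplx) : Cplx := proj1_sig (lim_exists _ (Ebound x)).
Definition Oth (x : Cplx) : Cplx := proj1_sig (lim_exists _ (Obound x)).

Variable th : Cplx -> Cplx.
Hypothesis Hth : is_theta tau th.

Definition phi1 (p : Z * Z) : Z * Z := ((fst p + snd p)%Z, (fst p - snd p - 1)%Z).
Definition phi0 (p : Z * Z) : Z * Z := ((fst p + snd p)%Z, (fst p - snd p)%Z).

Lemma L2_nodup : forall N, NoDup (map phi1 (box N) ++ map phi0 (box N)).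
Proof.
  intros N. assert (Hb : NoDup (box N)) by (unfold box; apply NoDup_prod; apply NoDup_zr).
  apply NoDup_app.
  - apply NoDup_map_NoDup_ForallPairs; auto. intros [j l] [j' l'] _ _ E. unfold phi1 in E; simpl in E.
    injection E; intros. f_equal; lia.
  - apply NoDup_map_NoDup_ForallPairs; auto. intros [j l] [j' l'] _ _ E. unfold phi0 in E; simpl in E.
    injection E; intros. f_equal; lia.
  - intros p H1 H2. apply in_map_iff in H1. apply in_map_iff in H2.
    destruct H1 as [[j l] [E1 _]]. destruct H2 as [[j' l'] [E2 _]]. subst p.
    unfold phi0, phi1 in E2; simpl in E2. injection E2; intros. lia.
Qed.

Lemma L2_sub : forall N p, In p (map phi1 (box N) ++ map phi0 (box N)) -> In p (box (2 * N + 1)).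
Proof.
  intros N p H. apply in_app_or in H. apply in_box.
  destruct H as [H|H]; apply in_map_iff in H; destruct H as [[j l] [<- Hjl]]; apply in_box in Hjl;
  unfold inbox, phi0, phi1 in *; simpl in *; rewrite andb_true_iff, !Z.leb_le in *; lia.
Qed.

Lemma L2_sup : forall N p, In p (box N) -> In p (map phi1 (box N) ++ map phi0 (box N)).
Proof.
  intros N [m n] H. apply in_box in H. unfold inbox in H. simpl in H. rewrite andb_true_iff, !Z.leb_le in H.
  apply in_or_app. destruct (Z.Even_or_Odd (m + n)) as [[k Hk]|[k Hk]].
  - right. apply in_map_iff. exists (k, (m - k)%Z). unfold phi0; simpl. split.
    + f_equal; lia.
    + apply in_box. unfold inbox; simpl. rewrite andb_true_iff, !Z.leb_le. lia.
  - left. apply in_map_iff. exists ((k + 1)%Z, (m - k - 1)%Z). unfold phi1; simpl. split.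
    + f_equal; lia.
    + apply in_box. unfold inbox; simpl. rewrite andb_true_iff, !Z.leb_le. lia.
Qed.

Definition EN (x : Cplx) (N : nat) := Csum (map (fun j => uterm tau x (2 * j)) (zr N)).
Definition ON (x : Cplx) (N : nat) := Csum (map (fun j => uterm tau x (2 * j + 1)) (zr N)).

Lemma close_bound : forall x y Ca Cb,
  0 <= Ca -> 0 <= Cb ->
  (forall j, n1 (theta_term tau (Cadd x y) j) <= Ca * g1 rho0 j) ->
  (forall j, n1 (theta_term tau (Csub x y) j) <= Cb * g1 rho0 j) ->
  forall N, n1 (Csub (Cmul (Zsym_partial (theta_term tau (Cadd x y)) N) (Zsym_partial (theta_term tau (Csub x y)) N))
                     (Csub (Cmul (EN x N) (ON y N)) (Cmul (ON x N) (EN y N))))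
            <= (Ca * Cb) * (SK rho0 (2 * N + 1) * SK rho0 (2 * N + 1) - SK rho0 N * SK rho0 N).
Proof.
  intros x y Ca Cb HCa HCb Ha Hb N.
  set (w := fun p : Z * Z => Cmul (theta_term tau (Cadd x y) (fst p)) (theta_term tau (Csub x y) (snd p))).
  assert (EV : Cmul (Zsym_partial (theta_term tau (Cadd x y)) N) (Zsym_partial (theta_term tau (Csub x y)) N)
               = Csum (map w (box N))).
  { rewrite !Zsym_zr, Csum_prod. reflexivity. }
  assert (EU : Csub (Cmul (EN x N) (ON y N)) (Cmul (ON x N) (EN y N))
               = Csum (map w (map phi1 (box N) ++ map phi0 (box N)))).
  { unfold EN, ON, box. rewrite !Csum_prod. rewrite map_app, Csum_app, !map_map.
    rewrite (Csum_ext _ (fun p => Cmul (uterm tau x (2 * fst p)) (uterm tau y (2 * snd p + 1)))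
                        (fun p => w (phi1 p))).
    2:{ intros [j l] _. unfold w, phi1; simpl. symmetry. apply term_id1. }
    rewrite (Csum_ext _ (fun p => Cmul (uterm tau x (2 * fst p + 1)) (uterm tau y (2 * snd p)))
                        (fun p => Copp (w (phi0 p)))).
    2:{ intros [j l] _. unfold w, phi0; simpl. rewrite term_id0. Cring. }
    assert (Eo : Csum (map (fun p => Copp (w (phi0 p))) (list_prod (zr N) (zr N))) = Copp (Csum (map (fun p => w (phi0 p)) (list_prod (zr N) (zr N))))).
    { generalize (list_prod (zr N) (zr N)). induction l; simpl. - Cring. - rewrite IHl. Cring. }
    rewrite Eo. Cring. }
  rewrite EV, EU.
  apply (box_compare rho0 rho0_bounds w (Ca * Cb) (box N) _ N (2 * N + 1)).
  - lia.
  - unfold box; apply NoDup_prod; apply NoDup_zr.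
  - apply L2_nodup.
  - intros p Hp. apply in_box. apply in_box in Hp. destruct p. unfold inbox in *. simpl in *.
    rewrite andb_true_iff, !Z.leb_le in *. lia.
  - apply L2_sub.
  - auto.
  - apply L2_sup.
  - intros m n. unfold w; simpl. eapply Rle_trans; [apply n1_mul|].
    pose proof (n1_nonneg (theta_term tau (Cadd x y) m)). pose proof (n1_nonneg (theta_term tau (Csub x y) n)).
    pose proof (Ha m). pose proof (Hb n).
    replace (Ca * Cb * (g1 rho0 m * g1 rho0 n)) with ((Ca * g1 rho0 m) * (Cb * g1 rho0 n)) by ring.
    apply Rmult_le_compat; auto.
Qed.

Lemma theta_prod : forall x y, Cmul (th (Cadd x y)) (th (Csub x y)) = Csub (Cmul (Eth x) (Oth y)) (Cmul (Oth x) (Eth y)).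
Proof.
  intros x y.
  pose proof (proj2_sig (lim_exists _ (Ebound x))) as HEx. change (proj1_sig (lim_exists _ (Ebound x))) with (Eth x) in HEx.
  pose proof (proj2_sig (lim_exists _ (Ebound y))) as HEy. change (proj1_sig (lim_exists _ (Ebound y))) with (Eth y) in HEy.
  pose proof (proj2_sig (lim_exists _ (Obound x))) as HOx. change (proj1_sig (lim_exists _ (Obound x))) with (Oth x) in HOx.
  pose proof (proj2_sig (lim_exists _ (Obound y))) as HOy. change (proj1_sig (lim_exists _ (Obound y))) with (Oth y) in HOy.
  simpl in HEx, HEy, HOx, HOy.
  assert (HU : Cseq_cv (fun N => Csub (Cmul (EN x N) (ON y N)) (Cmul (ON x N) (EN y N)))
                       (Csub (Cmul (Eth x) (Oth y)) (Cmul (Oth x) (Eth y)))).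
  { apply Cseq_cv_sub; apply Cseq_cv_mul; auto. }
  assert (HV : Cseq_cv (fun N => Cmul (Zsym_partial (theta_term tau (Cadd x y)) N) (Zsym_partial (theta_term tau (Csub x y)) N))
                       (Cmul (Copp (th (Cadd x y))) (Copp (th (Csub x y))))).
  { apply Cseq_cv_mul; apply Hth. }
  destruct (theta_bound tau (Cadd x y) Ht) as [Ca [HCa Ha]].
  destruct (theta_bound tau (Csub x y) Ht) as [Cb [HCb Hb]].
  assert (Hclose : Un_cv (fun N => n1 (Csub (Cmul (Zsym_partial (theta_term tau (Cadd x y)) N) (Zsym_partial (theta_term tau (Csub x y)) N))
                     (Csub (Cmul (EN x N) (ON y N)) (Cmul (ON x N) (EN y N))))) 0).
  { intros eps Heps.
    set (X := Ca * Cb * 2 * Sinf rho0).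
    assert (HS : 0 <= Sinf rho0) by (pose proof (SK_le rho0 rho0_bounds 0); lra).
    assert (HX : 0 <= X) by (unfold X; repeat apply Rmult_le_pos; lra).
    destruct (SK_cv rho0 rho0_bounds (eps / (X + 1))) as [N0 HN0]. { apply Rdiv_lt_0_compat; lra. }
    exists N0. intros N HN. specialize (HN0 N HN). unfold Rdist in *.
    rewrite Rminus_0_r, Rabs_pos_eq by apply n1_nonneg.
    eapply Rle_lt_trans; [apply (close_bound x y Ca Cb HCa HCb Ha Hb N)|].
    pose proof (SK_le rho0 rho0_bounds N). pose proof (SK_le rho0 rho0_bounds (2 * N + 1)).
    rewrite Rabs_minus_sym, Rabs_pos_eq in HN0 by lra.
    assert (H1 : SK rho0 (2 * N + 1) * SK rho0 (2 * N + 1) - SK rho0 N * SK rho0 N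
                 <= (Sinf rho0 - SK rho0 N) * (2 * Sinf rho0)) by nra.
    assert (H2 : (X + 1) * (Sinf rho0 - SK rho0 N) < eps).
    { apply (Rmult_lt_compat_l (X + 1)) in HN0; [|lra]. unfold Rdiv in HN0.
      rewrite <- Rmult_assoc, (Rmult_comm (X + 1) eps), Rmult_assoc, Rinv_r, Rmult_1_r in HN0 by lra. lra. }
    assert (H3 : 0 <= Ca * Cb) by (apply Rmult_le_pos; auto).
    assert (Ca * Cb * (SK rho0 (2 * N + 1) * SK rho0 (2 * N + 1) - SK rho0 N * SK rho0 N)
            <= X * (Sinf rho0 - SK rho0 N)).
    { unfold X. replace (Ca * Cb * 2 * Sinf rho0 * (Sinf rho0 - SK rho0 N)) with
        (Ca * Cb * ((Sinf rho0 - SK rho0 N) * (2 * Sinf rho0))) by ring.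
      apply Rmult_le_compat_l; auto. }
    nra. }
  pose proof (Cseq_cv_close _ _ _ HU Hclose) as HV'.
  pose proof (Cseq_cv_unique _ _ _ HV HV') as E.
  rewrite <- E. ring.
Qed.
End Theta.


Theorem theorem3p10
  (eta tau lam Lam : Cplx) (Htau : 0 < im tau)
  (f : Cplx -> Cplx) (Hf : f = sinpi \/ is_theta tau f)
  (J : nat) (HJ : (0 < J)%nat)
  (i1 i2 j1 j2 : nat) (Hj1 : (j1 <= J)%nat) (Hj2 : (j2 <= J)%nat)
  (Hcons : (i1 + j1 = i2 + j2)%nat)
  (* genericity: all denominators occurring are nonzero *)
  (Hnz_eta : forall n : nat, (1 <= n <= J)%nat ->
       f (Cmul (RtoC 2) (Cmul eta (RtoC (INR n)))) <> Czero)
  (Hnz_Lam : forall n : nat, (n < Nat.max i2 J)%nat ->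
       f (Csub (Cmul (RtoC 2) (Cmul eta Lam)) (Cmul (RtoC 2) (Cmul eta (RtoC (INR n))))) <> Czero)
  (Hnz_lam : forall m : Z, (- Z.of_nat J <= m <= Z.of_nat J)%Z ->
       f (Cadd lam (Cmul (RtoC 2) (Cmul eta (ZtoC m)))) <> Czero)
  (K : list bool) (HK : length K = J) (HKj2 : ones K = j2) :
  let P := poch f eta in
  let t := fun x : Cplx => Cmul (RtoC 2) (Cmul eta x) in
  let n := fun k : nat => RtoC (INR k) in
  WJfused_K f eta Lam J i1 j1 i2 K (Copp (Cmul eta Lam)) lam =
  Cmul (Cpowz (f (t Cone)) (Z.of_nat i2 - Z.of_nat i1))
  (Cmul (Cdiv (Cmul (if Nat.leb j2 i1 then Cone else Czero) (P (t (n J)) (Z.of_nat J)))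
              (Cmul (P (t (n j1)) (Z.of_nat j1)) (P (t (n (J - j1)%nat)) (Z.of_nat (J - j1)))))
  (Cmul (Cdiv (P (t Lam) (Z.of_nat i1)) (P (t Lam) (Z.of_nat i2)))
  (Cmul (Cdiv (Cmul (P (t (n i1)) (Z.of_nat j2))
                    (P (t (Csub Lam (n i1))) (Z.of_nat (J - j2))))
              (P (t Lam) (Z.of_nat J)))
        (Cdiv (Cmul (P (Cadd lam (t (n i2))) (Z.of_nat (J - j1)))
                    (P (Cadd lam (t (Csub (Cadd (n i2) (n j1)) (Cadd Lam Cone)))) (Z.of_nat j1)))
              (Cmul (P (Cadd lam (t (n j1))) (Z.of_nat (J - j1)))
                    (P (Cadd lam (t (ZtoC (2 * Z.of_nat j1 - Z.of_nat J - 1)%Z))) (Z.of_nat j1))))))).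
Proof.
  destruct Hf as [Hs | Hth].
  - subst f.
    exact (theorem_abstract sinpi Asin Bsin sin_prod eta lam Lam J HJ i1 i2 j1 j2 Hj1 Hj2 Hcons
             Hnz_eta Hnz_Lam Hnz_lam K HK HKj2).
  - exact (theorem_abstract f (Eth tau Htau) (Oth tau Htau) (theta_prod tau Htau f Hth) eta lam Lam J HJ i1 i2 j1 j2 Hj1 Hj2 Hcons
             Hnz_eta Hnz_Lam Hnz_lam K HK HKj2).
Qed.
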